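(* Let $\Gamma$ be a gain operator on $\ell^\infty_+(\mathcal I)$. Assume there is $\rho\in\mathcal K_\infty$ such that $\Gamma_\rho$ satisfies the $\oplus$-MBI property and, for each $r\ge0$, the point $\sigma_{*,\rho}(r):=\bigoplus_{n=0}^\infty\hat\Gamma_\rho^n(r\mathbf 1)$ is a globally attractive fixed point of the operator $s\mapsto r\mathbf 1\oplus\Gamma_\rho(s)$ (i.e. every trajectory of this operator converges in norm to $\sigma_{*,\rho}(r)$). Then there exists a path of strict decay for $\Gamma$.
   Context: Let $\mathcal I$ be a nonempty countable index set; $\ell^\infty_+(\mathcal I)$ is the cone of nonnegative real families $s=(s_i)_{i\in\mathcal I}$ with $\|s\|:=\sup_i|s_i|<\infty$, ordered componentwise; $\mathbf 1$ is the all-ones vector; $\oplus$ is the componentwise maximum, $\bigoplus$ the componentwise supremum. $\mathcal K_\infty$: continuous strictly increasing unbounded $\gamma:\mathbb R_+\to\mathbb R_+$ with $\gamma(0)=0$, acting on $\ell^\infty_+(\mathcal I)$ componentwise. For $\mathcal J\subset\mathcal I$, $s_{|\mathcal J}$ agrees with $s$ on $\mathcal J$ and is $0$ elsewhere. Gain operator: for each $i$ a finite (possibly empty) $\mathcal I_i\subset\mathcal I\setminus\{i\}$; directed graph $\mathcal G$ with vertices $\mathcal I$ and edges $ji$, $j\in\mathcal I_i$; a pointwise equicontinuous family $\gamma_{ij}\in\mathcal K_\infty$ ($ji\in E(\mathcal G)$); functions $\mu_i:\ell^\infty_+(\mathcal I)\to[0,\infty]$ with (M1) some $\xi\in\mathcal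 K_\infty$ has $\mu_i(0)=0$, $\mu_i(s)\ge\xi(\|s\|)$; (M2) $\mu_i$ monotone; (M3) for each finite $\mathcal J$, $\mu_i$ restricted to vectors vanishing off $\mathcal J$ is finite-valued and continuous; (M4) for each norm-bounded $A$ and $\varepsilon>0$ there is $\delta>0$ with $\sup_i|\mu_i(s_{|\mathcal I_i})-\mu_i(s^0_{|\mathcal I_i})|\le\varepsilon$ whenever $s^0\in A$, $\|s-s^0\|\le\delta$. $\Gamma_i(s):=\mu_i([\gamma_{ij}(s_j)]_{j\in\mathcal I_i})$ (argument zero outside $\mathcal I_i$). $\Gamma_\rho:=(\mathrm{id}+\rho)\circ\Gamma$, $\hat\Gamma_\rho(s):=s\oplus\Gamma_\rho(s)$. A monotone $T$ has the $\oplus$-MBI property if there is $\varphi\in\mathcal K_\infty$ such that for all $s,b$, $s\le b\oplus T(s)$ implies $\|s\|\le\varphi(\|b\|)$. A path of strict decay for $\Gamma$ is a map $\sigma:\mathbb R_+\to\ell^\infty_+(\mathcal I)$ such that: (i) for some $\rho\in\mathcal K_\infty$, $\Gamma_\rho(\sigma(r))\le\sigma(r)$ for all $r\ge0$; (ii) $\varphi_{\min}(r)\mathbf 1\le\sigma(r)\le\varphi_{\max}(r)\mathbf 1$ for some $\varphi_{\min},\varphi_{\max}\in\mathcal K_\infty$; (iii) each $\sigma_i\in\mathcal K_\infty$; (iv) for each compact $K\subset(0,\infty)$ there are $0<l\le L$ with $l|r_1-r_2|\le|\sigma_i^{-1}(r_1)-\sigma_i^{-1}(r_2)|\le L|r_1-r_2|$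 for all $r_1,r_2\in K$, $i\in\mathcal I$. *)

(* Defs.v *)
From Stdlib Require Import Reals Rtopology ClassicalEpsilon List.
From Coquelicot Require Import Coquelicot.
Open Scope R_scope.

Section Defs.
Context {I : Type}.

(* K_infinity functions on R_+ (values outside R_+ are irrelevant). *)
Definition Kinf (g : R -> R) : Prop :=
  g 0 = 0 /\
  (forall x, 0 <= x -> forall eps, 0 < eps -> exists delta, 0 < delta /\
     forall y, 0 <= y -> Rabs (y - x) < delta -> Rabs (g y - g x) < eps) /\
  (forall x y, 0 <= x -> x < y -> g x < g y) /\
  (forall M, exists x, 0 <= x /\ M < g x).

Definition linf_pos (s : I -> R) : Prop :=
  (forall i, 0 <= s i) /\ exists C, forall i, Rabs (s i) <= C.

Definition supnorm (s : I -> R) : R :=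
  real (Lub_Rbar (fun x => exists i, x = Rabs (s i))).

Definition vle (s t : I -> R) : Prop := forall i, s i <= t i.
Definition vmax (s t : I -> R) : I -> R := fun i => Rmax (s i) (t i).
Definition vsub (s t : I -> R) : I -> R := fun i => s i - t i.
Definition vconst (r : R) : I -> R := fun _ => r.

Definition restr (J : list I) (s : I -> R) : I -> R :=
  fun k => if excluded_middle_informative (In k J) then s k else 0.

Definition vanish_off (J : list I) (s : I -> R) : Prop :=
  forall k, ~ In k J -> s k = 0.

(* A gain operator is given by the data
   Ii : I -> list I  (the finite sets I_i, edges ji of the graph G),
   gam : I -> I -> R -> R  (gam i j = gamma_ij, relevant for j in I_i),
   mu : I -> (I -> R) -> Rbar  (the functions mu_i, relevant on l^infty_+). *)
Definition gain_operator (Ii : I -> list I) (gam : I -> I -> R -> R)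
    (mu : I -> (I -> R) -> Rbar) : Prop :=
  (forall i, ~ In i (Ii i)) /\
  (forall i j, In j (Ii i) -> Kinf (gam i j)) /\
  (forall r, 0 <= r -> forall eps, 0 < eps -> exists delta, 0 < delta /\
     forall i j, In j (Ii i) -> forall r', 0 <= r' -> Rabs (r' - r) < delta ->
       Rabs (gam i j r' - gam i j r) < eps) /\
  (exists xi, Kinf xi /\ forall i, mu i (vconst 0) = Finite 0 /\
     forall s, linf_pos s -> Rbar_le (Finite (xi (supnorm s))) (mu i s)) /\
  (forall i s1 s2, linf_pos s1 -> linf_pos s2 -> vle s1 s2 ->
     Rbar_le (mu i s1) (mu i s2)) /\
  (forall i (J : list I), forall s, linf_pos s -> vanish_off J s ->
     is_finite (mu i s) /\
     forall eps, 0 < eps -> exists delta, 0 < delta /\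
       forall s', linf_pos s' -> vanish_off J s' -> supnorm (vsub s' s) < delta ->
         Rabs (real (mu i s') - real (mu i s)) < eps) /\
  (forall (A : (I -> R) -> Prop), (exists C, forall s, A s -> linf_pos s /\ supnorm s <= C) ->
     forall eps, 0 < eps -> exists delta, 0 < delta /\
       forall s0 s, A s0 -> linf_pos s -> supnorm (vsub s s0) <= delta ->
         forall i, Rabs (real (mu i (restr (Ii i) s)) - real (mu i (restr (Ii i) s0))) <= eps).

(* Gamma_i(s) = mu_i([gamma_ij(s_j)]_{j in I_i}) ; finite by (M3) *)
Definition Gam (Ii : I -> list I) (gam : I -> I -> R -> R)
    (mu : I -> (I -> R) -> Rbar) (s : I -> R) : I -> R :=
  fun i => real (mu i (fun j => if excluded_middle_informative (In j (Ii i))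
                                then gam i j (s j) else 0)).

Definition Gam_rho Ii gam mu (rho : R -> R) (s : I -> R) : I -> R :=
  fun i => Gam Ii gam mu s i + rho (Gam Ii gam mu s i).

Definition hatGam_rho Ii gam mu (rho : R -> R) (s : I -> R) : I -> R :=
  vmax s (Gam_rho Ii gam mu rho s).

Definition MBI (T : (I -> R) -> (I -> R)) : Prop :=
  exists phi, Kinf phi /\
    forall s b, linf_pos s -> linf_pos b -> vle s (vmax b (T s)) ->
      supnorm s <= phi (supnorm b).

Definition sigma_star_Rbar Ii gam mu rho (r : R) (i : I) : Rbar :=
  Lub_Rbar (fun x => exists n : nat,
     x = Nat.iter n (hatGam_rho Ii gam mu rho) (vconst r) i).

Definition sigma_star Ii gam mu rho (r : R) : I -> R :=
  fun i => real (sigma_star_Rbar Ii gam mu rho r i).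

Definition glob_attr_fixed_point (T : (I -> R) -> (I -> R)) (sigma : I -> R) : Prop :=
  linf_pos sigma /\ T sigma = sigma /\
  forall s0, linf_pos s0 ->
    forall eps, 0 < eps -> exists N : nat, forall n, (N <= n)%nat ->
      supnorm (vsub (Nat.iter n T s0) sigma) < eps.

Definition path_strict_decay Ii gam mu (sigma : R -> I -> R) : Prop :=
  (exists rho, Kinf rho /\
     forall r, 0 <= r -> vle (Gam_rho Ii gam mu rho (sigma r)) (sigma r)) /\
  (exists phimin phimax, Kinf phimin /\ Kinf phimax /\
     forall r, 0 <= r -> forall i, phimin r <= sigma r i <= phimax r) /\
  (forall i, Kinf (fun r => sigma r i)) /\
  (forall K : R -> Prop, Rtopology.compact K -> (forall x, K x -> 0 < x) ->
     exists l L, 0 < l /\ l <= L /\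
       forall i r1 r2 t1 t2, K r1 -> K r2 -> 0 <= t1 -> 0 <= t2 ->
         sigma t1 i = r1 -> sigma t2 i = r2 ->
         (* t_k = sigma_i^{-1}(r_k) *)
         l * Rabs (r1 - r2) <= Rabs (t1 - t2) <= L * Rabs (r1 - r2)).

End Defs.

(* Main.v *)
Require Import Defs.
From Stdlib Require Import Reals List Lra Lia ZArith Rtopology ClassicalEpsilon FunctionalExtensionality.
From Coquelicot Require Import Coquelicot.
Open Scope R_scope.

Lemma my_choice {A B : Type} (P : A -> B -> Prop) :
  (forall a, exists b, P a b) -> exists f, forall a, P a (f a).
Proof.
  intros H. exists (fun a => proj1_sig (constructive_indefinite_description _ (H a))).
  intro a. exact (proj2_sig (constructive_indefinite_description _ (H a))).
Qed.

Lemma lub_fin (E : R -> Prop) (M : R) :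
  (exists x, E x) -> (forall x, E x -> x <= M) ->
  is_finite (Lub_Rbar E) /\ (forall x, E x -> x <= real (Lub_Rbar E)) /\ real (Lub_Rbar E) <= M.
Proof.
  intros [x0 Hx0] HM. destruct (Lub_Rbar_correct E) as [Hub Hl].
  assert (H1 : Rbar_le (Lub_Rbar E) M) by (apply Hl; intros y Hy; simpl; apply HM; auto).
  assert (H2 : Rbar_le x0 (Lub_Rbar E)) by (apply Hub; auto).
  destruct (Lub_Rbar E) as [r| |] eqn:Heq; simpl in *; try contradiction.
  split; [reflexivity|]. split; [|exact H1].
  intros y Hy. exact (Hub y Hy).
Qed.

Lemma glb_fin (E : R -> Prop) (m : R) :
  (exists x, E x) -> (forall x, E x -> m <= x) ->
  is_finite (Glb_Rbar E) /\ (forall x, E x -> real (Glb_Rbar E) <= x) /\ m <= real (Glb_Rbar E).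
Proof.
  intros [x0 Hx0] HM. destruct (Glb_Rbar_correct E) as [Hlb Hl].
  assert (H1 : Rbar_le m (Glb_Rbar E)) by (apply Hl; intros y Hy; simpl; apply HM; auto).
  assert (H2 : Rbar_le (Glb_Rbar E) x0) by (apply Hlb; auto).
  destruct (Glb_Rbar E) as [r| |] eqn:Heq; simpl in *; try contradiction.
  split; [reflexivity|]. split; [|exact H1].
  intros y Hy. exact (Hlb y Hy).
Qed.

Lemma glb_ge (E : R -> Prop) (m : R) :
  (exists x, E x) -> (forall x, E x -> m <= x) -> m <= real (Glb_Rbar E).
Proof. intros H1 H2. apply (glb_fin E m H1 H2). Qed.

Lemma glb_le (E : R -> Prop) (m x : R) :
  (forall y, E y -> m <= y) -> E x -> real (Glb_Rbar E) <= x.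
Proof. intros H1 H2. apply (glb_fin E m (ex_intro _ x H2) H1). exact H2. Qed.

Section KinfLemmas.
Variable g : R -> R.
Hypothesis Hg : Kinf g.

Lemma Kinf_0 : g 0 = 0.
Proof. apply Hg. Qed.

Lemma Kinf_mono : forall x y, 0 <= x -> x <= y -> g x <= g y.
Proof.
  intros x y Hx Hxy. destruct Hg as [_ [_ [Hs _]]].
  destruct (Req_dec x y) as [->|Hne]; [lra|]. left. apply Hs; lra.
Qed.

Lemma Kinf_strict : forall x y, 0 <= x -> x < y -> g x < g y.
Proof. intros. apply Hg; auto. Qed.

Lemma Kinf_nonneg : forall x, 0 <= x -> 0 <= g x.
Proof. intros x Hx. rewrite <- Kinf_0. apply Kinf_mono; lra. Qed.

Lemma Kinf_pos : forall x, 0 < x -> 0 < g x.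
Proof. intros x Hx. rewrite <- Kinf_0. apply Kinf_strict; lra. Qed.

Lemma Kinf_small : forall eps, 0 < eps -> exists d, 0 < d /\ forall x, 0 <= x -> x <= d -> g x <= eps.
Proof.
  intros eps He. destruct Hg as [H0 [Hc _]].
  destruct (Hc 0 (Rle_refl 0) eps He) as [d [Hd Hd']].
  exists (d/2). split; [lra|]. intros x Hx Hxd.
  specialize (Hd' x Hx). rewrite H0 in Hd'. rewrite Rminus_0_r, Rminus_0_r in Hd'.
  rewrite Rabs_pos_eq in Hd' by lra. assert (Hpos := Kinf_nonneg x Hx).
  rewrite Rabs_pos_eq in Hd' by lra. left. apply Hd'. lra.
Qed.

Lemma Kinf_ge_id_bound : forall M, exists x, 0 <= x /\ M < g x.
Proof. apply Hg. Qed.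

End KinfLemmas.

Lemma UEC {A : Type} (f : A -> R -> R) (a b : R) :
  (forall x, a <= x <= b -> forall eps, 0 < eps -> exists d, 0 < d /\
     forall y, a <= y <= b -> Rabs (y - x) < d -> forall al, Rabs (f al y - f al x) <= eps) ->
  forall eps, 0 < eps -> exists d, 0 < d /\
     forall x y, a <= x <= b -> a <= y <= b -> Rabs (x - y) < d ->
       forall al, Rabs (f al x - f al y) <= eps.
Proof.
  intros H eps He.
  assert (Hc : forall x, exists d, 0 < d /\ (a <= x <= b -> forall y, a <= y <= b -> Rabs (y - x) < d ->
      forall al, Rabs (f al y - f al x) <= eps/2)).
  { intro x. destruct (Rle_dec a x) as [h1|h1]; [destruct (Rle_dec x b) as [h2|h2]|].
    - destruct (H x (conj h1 h2) (eps/2) ltac:(lra)) as [d [Hd Hd']]. exists d. split; auto.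
    - exists 1. split; [lra|]. intros; lra.
    - exists 1. split; [lra|]. intros; lra. }
  destruct (my_choice _ Hc) as [dd Hdd].
  set (fam := mkfamily (fun x => a <= x <= b) (fun x y => a <= x <= b /\ Rabs (y - x) < dd x / 2)
                (fun x (h : exists y, a <= x <= b /\ Rabs (y - x) < dd x / 2) =>
                   match h with ex_intro _ hh => proj1 hh end)).
  assert (Hcov : covering_open_set (fun c => a <= c <= b) fam).
  { split.
    - intros x Hx. exists x. simpl. split; auto. rewrite Rminus_diag, Rabs_R0.
      destruct (Hdd x) as [h _]. lra.
    - intros x y [Hx Hy]. simpl in *.
      assert (Hpos : 0 < dd x / 2 - Rabs (y - x)) by lra.
      exists (mkposreal _ Hpos). intros z Hz. unfold disc in Hz. simpl in Hz. simpl. split; auto.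
      replace (z - x) with ((z - y) + (y - x)) by ring.
      eapply Rle_lt_trans; [apply Rabs_triang|]. lra. }
  destruct (compact_P3 a b fam Hcov) as [D [HcovD [l Hl]]].
  set (m := fold_right (fun y acc => Rmin (dd y / 2) acc) 1 l).
  assert (Hm : 0 < m /\ forall y, In y l -> m <= dd y / 2).
  { unfold m. clear -Hdd. induction l as [|y l IH]; simpl.
    - split; [lra|]. intros _ [].
    - destruct IH as [IH1 IH2]. destruct (Hdd y) as [h _]. split.
      + apply Rmin_pos; lra.
      + intros z [<-|Hz]. apply Rmin_l. eapply Rle_trans; [apply Rmin_r|]. auto. }
  exists m. split; [apply Hm|].
  intros x y Hx Hy Hxy al.
  destruct (HcovD x Hx) as [z [[Hz Hxz] HDz]]. simpl in *.
  assert (Hzl : In z l) by (apply Hl; split; auto).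
  pose proof (proj2 Hm z Hzl) as Hmz.
  destruct (Hdd z) as [_ Hz'].
  assert (H1 := Hz' Hz x Hx ltac:(lra) al).
  assert (H2 : Rabs (y - z) < dd z).
  { replace (y - z) with ((y - x) + (x - z)) by ring.
    eapply Rle_lt_trans; [apply Rabs_triang|]. rewrite Rabs_minus_sym in Hxy. lra. }
  assert (H3 := Hz' Hz y Hy H2 al).
  replace (f al x - f al y) with ((f al x - f al z) - (f al y - f al z)) by ring.
  eapply Rle_trans; [apply Rabs_triang|]. rewrite Rabs_Ropp. lra.
Qed.

Lemma chain_bound (f : R -> R) (Rb d : R) :
  f 0 <= 0 -> 0 < d ->
  (forall x y, 0 <= x <= Rb -> 0 <= y <= Rb -> Rabs (x - y) <= d -> f y <= f x + 1) ->
  forall n : nat, forall x, 0 <= x <= Rb -> x <= INR n * d -> f x <= INR n.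
Proof.
  intros H0 Hd H n. induction n as [|n IH]; intros x Hx Hxn.
  - simpl in *. replace x with 0 by (destruct Hx; nra). lra.
  - rewrite S_INR in *. destruct (Rle_dec x (INR n * d)) as [h|h].
    + specialize (IH x Hx h). lra.
    + destruct (Rle_dec x d) as [h2|h2].
      * assert (Hn := pos_INR n). specialize (H 0 x ltac:(lra) Hx).
        assert (f x <= f 0 + 1) by (apply H; rewrite Rabs_minus_sym, Rminus_0_r, Rabs_pos_eq; lra). lra.
      * assert (Hx' : 0 <= x - d <= Rb) by lra.
        specialize (IH (x - d) Hx' ltac:(lra)).
        assert (f x <= f (x - d) + 1) by (apply H; auto; replace (x - d - x) with (-d) by ring;
          rewrite Rabs_Ropp, Rabs_pos_eq; lra). lra.
Qed.

Lemma chain_bound' (Rb d : R) :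
  0 < d -> 0 <= Rb -> exists B, forall f : R -> R,
  f 0 <= 0 ->
  (forall x y, 0 <= x <= Rb -> 0 <= y <= Rb -> Rabs (x - y) <= d -> f y <= f x + 1) ->
  forall x, 0 <= x <= Rb -> f x <= B.
Proof.
  intros Hd HR. destruct (archimed (Rb / d)) as [Hup _].
  assert (Hz : (0 <= up (Rb / d))%Z).
  { apply le_IZR. assert (0 <= Rb / d) by (apply Rdiv_le_0_compat; lra). lra. }
  exists (INR (Z.to_nat (up (Rb / d)))). intros f H0 H x Hx.
  apply (chain_bound f Rb d H0 Hd H); auto.
  rewrite INR_IZR_INZ, Z2Nat.id by auto.
  assert (Rb / d * d = Rb) by (field; lra).
  assert (Rb / d <= IZR (up (Rb / d))) by lra. nra.
Qed.

Fixpoint sumk (N : nat) (g : nat -> R) : R :=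
  match N with O => 0 | S n => sumk n g + g n end.

Lemma sumk_ext N g h : (forall k, (k < N)%nat -> g k = h k) -> sumk N g = sumk N h.
Proof. induction N; simpl; intros H; auto. rewrite IHN by (intros; apply H; lia). rewrite H by lia. auto. Qed.

Lemma sumk_le N g h : (forall k, (k < N)%nat -> g k <= h k) -> sumk N g <= sumk N h.
Proof. induction N; simpl; intros H; [lra|]. assert (IH := IHN ltac:(intros; apply H; lia)). specialize (H N ltac:(lia)). lra. Qed.

Lemma sumk_plus N g h : sumk N (fun k => g k + h k) = sumk N g + sumk N h.
Proof. induction N; simpl; [lra|]. rewrite IHN. ring. Qed.

Lemma sumk_minus N g h : sumk N (fun k => g k - h k) = sumk N g - sumk N h.
Proof. induction N; simpl; [lra|]. rewrite IHN. ring. Qed.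

Lemma sumk_scal N c g : sumk N (fun k => c * g k) = c * sumk N g.
Proof. induction N; simpl; [ring|]. rewrite IHN. ring. Qed.

Lemma sumk_geom N : sumk N (fun k => / 2 ^ (k + 3)) <= / 4.
Proof.
  assert (forall N, sumk N (fun k => / 2 ^ (k + 3)) = /4 - / 2 ^ (N + 2)).
  { induction N0; simpl. field. rewrite IHN0. replace (S N0 + 2)%nat with (N0 + 3)%nat by lia.
    rewrite (pow_add 2 N0 3), (pow_add 2 N0 2). simpl. field. apply pow_nonzero. lra. }
  rewrite H. assert (0 < / 2 ^ (N + 2)) by (apply Rinv_0_lt_compat, pow_lt; lra). lra.
Qed.

Section Model.
Context {I : Type} (Hne : inhabited I) (Ii : I -> list I) (gam : I -> I -> R -> R)
  (mu : I -> (I -> R) -> Rbar) (HG : gain_operator Ii gam mu).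

Lemma supnorm_ub (s : I -> R) C : (forall i, Rabs (s i) <= C) -> forall i, Rabs (s i) <= supnorm s.
Proof.
  intros H i. unfold supnorm.
  destruct (lub_fin (fun x => exists i, x = Rabs (s i)) C (ex_intro _ _ (ex_intro _ i eq_refl)))
    as [_ [H2 _]].
  { intros x [j ->]. auto. }
  apply H2. exists i; auto.
Qed.

Lemma supnorm_le (s : I -> R) C : (forall i, Rabs (s i) <= C) -> supnorm s <= C.
Proof.
  intros H. destruct Hne as [i0]. unfold supnorm.
  destruct (lub_fin (fun x => exists i, x = Rabs (s i)) C (ex_intro _ _ (ex_intro _ i0 eq_refl)))
    as [_ [_ H3]]; auto.
  intros x [j ->]. auto.
Qed.

Lemma supnorm_const r : 0 <= r -> supnorm (vconst (I:=I) r) = r.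
Proof.
  intros Hr. apply Rle_antisym.
  - apply supnorm_le. intros i. unfold vconst. rewrite Rabs_pos_eq; lra.
  - destruct Hne as [i0]. assert (H := supnorm_ub (vconst (I:=I) r) r ltac:(intros; unfold vconst; rewrite Rabs_pos_eq; lra) i0).
    unfold vconst in H at 1. rewrite Rabs_pos_eq in H; lra.
Qed.

Lemma linf_bound (s : I -> R) : linf_pos s -> forall i, s i <= supnorm s.
Proof.
  intros [Hp [C HC]] i. eapply Rle_trans; [apply Rle_abs|]. apply (supnorm_ub s C HC).
Qed.

Lemma supnorm_comp (s : I -> R) : (exists C, forall i, Rabs (s i) <= C) -> forall i, Rabs (s i) <= supnorm s.
Proof. intros [C HC]. apply (supnorm_ub s C HC). Qed.

Definition arg (i : I) (s : I -> R) : I -> R :=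
  fun j => if excluded_middle_informative (In j (Ii i)) then gam i j (s j) else 0.

Definition nn (s : I -> R) := forall j, 0 <= s j.
Definition bdd (s : I -> R) (Rb : R) := forall j, 0 <= s j <= Rb.

Lemma G_eq s i : Gam Ii gam mu s i = real (mu i (arg i s)).
Proof. reflexivity. Qed.

Lemma list_bound (l : list I) (f : I -> R) : exists C, 0 <= C /\ forall j, In j l -> Rabs (f j) <= C.
Proof.
  induction l as [|a l [C [HC0 HC]]].
  - exists 0. split; [lra|]. intros j [].
  - exists (Rmax (Rabs (f a)) C). split. eapply Rle_trans; [apply HC0|apply Rmax_r].
    intros j [<-|Hj]. apply Rmax_l. eapply Rle_trans; [apply HC; auto|apply Rmax_r].
Qed.

Let Hgam := proj1 (proj2 HG).
Let Heqc := proj1 (proj2 (proj2 HG)).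
Let HM1 := proj1 (proj2 (proj2 (proj2 HG))).
Let HM2 := proj1 (proj2 (proj2 (proj2 (proj2 HG)))).
Let HM3 := proj1 (proj2 (proj2 (proj2 (proj2 (proj2 HG))))).
Let HM4 := proj2 (proj2 (proj2 (proj2 (proj2 (proj2 HG))))).

Lemma arg_pos i s : nn s -> linf_pos (arg i s).
Proof.
  intros Hs. split.
  - intros j. unfold arg. destruct excluded_middle_informative; [|lra].
    apply (Kinf_nonneg _ (Hgam i j i0)). auto.
  - destruct (list_bound (Ii i) (fun j => gam i j (s j))) as [C [HC0 HC]].
    exists C. intros j. unfold arg. destruct excluded_middle_informative; auto.
    rewrite Rabs_R0; auto.
Qed.

Lemma arg_vanish i s : vanish_off (Ii i) (arg i s).
Proof. intros k Hk. unfold arg. destruct excluded_middle_informative; tauto. Qed.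

Lemma G_fin i s : nn s -> is_finite (mu i (arg i s)).
Proof. intros Hs. apply (HM3 i (Ii i) (arg i s) (arg_pos i s Hs) (arg_vanish i s)). Qed.

Lemma G_mono s s' : nn s -> vle s s' -> forall i, Gam Ii gam mu s i <= Gam Ii gam mu s' i.
Proof.
  intros Hs Hss' i. rewrite !G_eq.
  assert (Hs' : nn s') by (intros j; specialize (Hs j); specialize (Hss' j); lra).
  assert (H := HM2 i (arg i s) (arg i s') (arg_pos i s Hs) (arg_pos i s' Hs')).
  assert (Hle : vle (arg i s) (arg i s')).
  { intros j. unfold arg. destruct excluded_middle_informative; [|lra].
    apply (Kinf_mono _ (Hgam i j i0)); auto. }
  specialize (H Hle). rewrite <- (G_fin i s Hs), <- (G_fin i s' Hs') in H. exact H.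
Qed.

Lemma arg_zero i : arg i (vconst 0) = vconst 0.
Proof.
  apply functional_extensionality. intros j. unfold arg, vconst.
  destruct excluded_middle_informative; auto. apply (Kinf_0 _ (Hgam i j i0)).
Qed.

Lemma G_zero i : Gam Ii gam mu (vconst 0) i = 0.
Proof.
  rewrite G_eq, arg_zero. destruct HM1 as [xi [_ Hxi]]. rewrite (proj1 (Hxi i)). reflexivity.
Qed.

Lemma nn_const r : 0 <= r -> nn (vconst r).
Proof. intros Hr j. unfold vconst. auto. Qed.

Lemma G_nonneg s : nn s -> forall i, 0 <= Gam Ii gam mu s i.
Proof.
  intros Hs i. rewrite <- (G_zero i). apply G_mono. apply nn_const; lra.
  intros j. apply Hs.
Qed.

Lemma gam_unif Rb : 0 <= Rb -> forall eps, 0 < eps -> exists d, 0 < d /\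
  forall i j, In j (Ii i) -> forall a b, 0 <= a <= Rb -> 0 <= b <= Rb -> Rabs (a - b) < d ->
    Rabs (gam i j a - gam i j b) <= eps.
Proof.
  intros HR eps He.
  set (A := {p : I * I | In (snd p) (Ii (fst p))}).
  destruct (UEC (fun (p : A) x => gam (fst (proj1_sig p)) (snd (proj1_sig p)) x) 0 Rb) with (eps := eps)
    as [d [Hd Hd']]; auto.
  - intros x Hx e He'. destruct (Heqc x (proj1 Hx) e He') as [d [Hd Hd']].
    exists d. split; auto. intros y Hy Hyx [[i j] Hij]. simpl in *. left. apply Hd'; auto; lra.
  - exists d. split; auto. intros i j Hij a b Ha Hb Hab.
    exact (Hd' a b Ha Hb Hab (exist _ (i, j) Hij)).
Qed.

Lemma gam_bnd Rb : 0 <= Rb -> exists B, 0 <= B /\ forall i j, In j (Ii i) -> forall a, 0 <= a <= Rb ->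
  0 <= gam i j a <= B.
Proof.
  intros HR. destruct (gam_unif Rb HR 1 ltac:(lra)) as [d [Hd Hd']].
  destruct (chain_bound' Rb (d/2) ltac:(lra) HR) as [B HB].
  exists (Rmax B 0). split; [apply Rmax_r|]. intros i j Hij a Ha. split.
  - apply (Kinf_nonneg _ (Hgam i j Hij)); lra.
  - eapply Rle_trans; [|apply Rmax_l]. apply (HB (gam i j)); auto.
    + rewrite (Kinf_0 _ (Hgam i j Hij)); lra.
    + intros x y Hx Hy Hxy. assert (H := Hd' i j Hij y x Hy Hx ltac:(rewrite Rabs_minus_sym; lra)).
      apply Rabs_le_between in H. lra.
Qed.

Lemma restr_arg i s : restr (Ii i) (arg i s) = arg i s.
Proof.
  apply functional_extensionality. intros k. unfold restr, arg.
  destruct excluded_middle_informative; auto.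
Qed.

Lemma G_unif Rb : 0 <= Rb -> forall eps, 0 < eps -> exists d, 0 < d /\
  forall x y, bdd x Rb -> bdd y Rb -> (forall j, Rabs (x j - y j) <= d) ->
    forall i, Rabs (Gam Ii gam mu x i - Gam Ii gam mu y i) <= eps.
Proof.
  intros HR eps He. destruct (gam_bnd Rb HR) as [B [HB0 HB]].
  set (A := fun v => exists i x, bdd x Rb /\ v = arg i x).
  assert (HA : exists C, forall s, A s -> linf_pos s /\ supnorm s <= C).
  { exists B. intros s [i [x [Hx ->]]]. split.
    - apply arg_pos. intros j; apply Hx.
    - apply supnorm_le. intros j. unfold arg. destruct excluded_middle_informative.
      + destruct (HB i j i0 (x j) (Hx j)). rewrite Rabs_pos_eq; lra.
      + rewrite Rabs_R0; lra. }
  destruct (HM4 A HA eps He) as [d2 [Hd2 Hd2']].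
  destruct (gam_unif Rb HR d2 Hd2) as [d1 [Hd1 Hd1']].
  exists (d1/2). split; [lra|]. intros x y Hx Hy Hxy i.
  assert (Hsup : supnorm (vsub (arg i y) (arg i x)) <= d2).
  { apply supnorm_le. intros j. unfold vsub, arg. destruct excluded_middle_informative.
    - apply Hd1'; auto. specialize (Hxy j). rewrite Rabs_minus_sym in Hxy. lra.
    - rewrite Rminus_0_r, Rabs_R0; lra. }
  assert (H := Hd2' (arg i x) (arg i y) (ex_intro _ i (ex_intro _ x (conj Hx eq_refl)))
                 (arg_pos i y (fun j => proj1 (Hy j))) Hsup i).
  rewrite !restr_arg in H. rewrite !G_eq. rewrite Rabs_minus_sym. exact H.
Qed.

Lemma bdd_nn x Rb : bdd x Rb -> nn x.
Proof. intros H j. apply H. Qed.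

Lemma G_bnd Rb : 0 <= Rb -> exists B, 0 <= B /\ forall x, bdd x Rb -> forall i, 0 <= Gam Ii gam mu x i <= B.
Proof.
  intros HR. destruct (G_unif Rb HR 1 ltac:(lra)) as [d [Hd Hd']].
  destruct (chain_bound' Rb d Hd HR) as [B HB].
  exists (Rmax B 0). split; [apply Rmax_r|]. intros x Hx i. split.
  - apply G_nonneg. intros j; apply Hx.
  - eapply Rle_trans. apply (G_mono x (vconst Rb)). intros j; apply Hx. intros j; apply Hx.
    eapply Rle_trans; [|apply Rmax_l]. apply (HB (fun a => Gam Ii gam mu (vconst a) i)).
    + rewrite G_zero; lra.
    + intros a b Ha Hb Hab.
      assert (H := Hd' (vconst a) (vconst b) ltac:(intros j; unfold vconst; lra)
                 ltac:(intros j; unfold vconst; lra) ltac:(intros j; unfold vconst; lra) i).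
      apply Rabs_le_between in H. lra.
    + lra.
Qed.

Section Rho.
Variable rho : R -> R.
Hypothesis Hrho : Kinf rho.

Lemma rho_unif Rb : 0 <= Rb -> forall eps, 0 < eps -> exists d, 0 < d /\
  forall a b, 0 <= a <= Rb -> 0 <= b <= Rb -> Rabs (a - b) < d -> Rabs (rho a - rho b) <= eps.
Proof.
  intros HR eps He.
  destruct (UEC (fun (_ : unit) x => rho x) 0 Rb) with (eps := eps) as [d [Hd Hd']]; auto.
  - intros x Hx e He'. destruct Hrho as [_ [Hc _]]. destruct (Hc x (proj1 Hx) e He') as [d [Hd Hd']].
    exists d. split; auto. intros y Hy Hyx _. left. apply Hd'; auto; lra.
  - exists d. split; auto. intros a b Ha Hb Hab. exact (Hd' a b Ha Hb Hab tt).
Qed.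

Lemma Gr_eq x i : Gam_rho Ii gam mu rho x i = Gam Ii gam mu x i + rho (Gam Ii gam mu x i).
Proof. reflexivity. Qed.

Lemma Gr_nonneg x : nn x -> forall i, 0 <= Gam_rho Ii gam mu rho x i.
Proof.
  intros Hx i. rewrite Gr_eq. assert (H := G_nonneg x Hx i).
  assert (H2 := Kinf_nonneg rho Hrho _ H). lra.
Qed.

Lemma Gr_mono x y : nn x -> vle x y -> forall i, Gam_rho Ii gam mu rho x i <= Gam_rho Ii gam mu rho y i.
Proof.
  intros Hx Hxy i. rewrite !Gr_eq. assert (H := G_mono x y Hx Hxy i).
  assert (H0 := G_nonneg x Hx i). assert (H2 := Kinf_mono rho Hrho _ _ H0 H). lra.
Qed.

Lemma Gr_bnd Rb : 0 <= Rb -> exists B, 0 <= B /\ forall x, bdd x Rb -> forall i, 0 <= Gam_rho Ii gam mu rho x i <= B.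
Proof.
  intros HR. destruct (G_bnd Rb HR) as [B [HB0 HB]].
  exists (B + rho B). split. assert (H := Kinf_nonneg rho Hrho B HB0). lra.
  intros x Hx i. split. apply Gr_nonneg. intros j; apply Hx.
  rewrite Gr_eq. destruct (HB x Hx i) as [Ha Hb]. assert (Hc := Kinf_mono rho Hrho _ _ Ha Hb). lra.
Qed.

Lemma Gr_unif Rb : 0 <= Rb -> forall eps, 0 < eps -> exists d, 0 < d /\
  forall x y, bdd x Rb -> bdd y Rb -> (forall j, Rabs (x j - y j) <= d) ->
    forall i, Rabs (Gam_rho Ii gam mu rho x i - Gam_rho Ii gam mu rho y i) <= eps.
Proof.
  intros HR eps He. destruct (G_bnd Rb HR) as [B [HB0 HB]].
  destruct (rho_unif B HB0 (eps/2) ltac:(lra)) as [d1 [Hd1 Hd1']].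
  destruct (G_unif Rb HR (Rmin (eps/2) (d1/2)) ltac:(apply Rmin_pos; lra)) as [d2 [Hd2 Hd2']].
  exists d2. split; auto. intros x y Hx Hy Hxy i. rewrite !Gr_eq.
  assert (H1 := Hd2' x y Hx Hy Hxy i).
  assert (H1a : Rabs (Gam Ii gam mu x i - Gam Ii gam mu y i) <= eps/2) by (eapply Rle_trans; [apply H1|apply Rmin_l]).
  assert (H1b : Rabs (Gam Ii gam mu x i - Gam Ii gam mu y i) < d1) by (eapply Rle_lt_trans; [apply H1|]; eapply Rle_lt_trans; [apply Rmin_r|lra]).
  assert (H2 := Hd1' _ _ (HB x Hx i) (HB y Hy i) H1b).
  replace (Gam Ii gam mu x i + rho (Gam Ii gam mu x i) - (Gam Ii gam mu y i + rho (Gam Ii gam mu y i)))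
    with ((Gam Ii gam mu x i - Gam Ii gam mu y i) + (rho (Gam Ii gam mu x i) - rho (Gam Ii gam mu y i))) by ring.
  eapply Rle_trans; [apply Rabs_triang|]. lra.
Qed.

Definition T (r : R) (x : I -> R) : I -> R := vmax (vconst r) (Gam_rho Ii gam mu rho x).

Lemma T_ge r x i : r <= T r x i.
Proof. unfold T, vmax, vconst. apply Rmax_l. Qed.

Lemma T_mono r x y : nn x -> vle x y -> vle (T r x) (T r y).
Proof.
  intros Hx Hxy i. unfold T, vmax. apply Rle_max_compat_l. apply Gr_mono; auto.
Qed.

Lemma T_r_mono r q x : r <= q -> vle (T r x) (T q x).
Proof. intros Hrq i. unfold T, vmax, vconst. apply Rle_max_compat_r. auto. Qed.

Lemma T_r_lip r q x : r <= q -> forall i, T q x i <= T r x i + (q - r).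
Proof.
  intros Hrq i. unfold T, vmax, vconst. unfold Rmax.
  destruct Rle_dec; destruct Rle_dec; lra.
Qed.

Lemma T_lip r x y i : Rabs (T r x i - T r y i) <= Rabs (Gam_rho Ii gam mu rho x i - Gam_rho Ii gam mu rho y i).
Proof.
  unfold T, vmax, vconst. unfold Rmax. set (a := Gam_rho Ii gam mu rho x i). set (b := Gam_rho Ii gam mu rho y i).
  destruct Rle_dec; destruct Rle_dec; unfold Rabs; repeat destruct Rcase_abs; lra.
Qed.

Lemma T_linf r x : 0 <= r -> linf_pos x -> linf_pos (T r x).
Proof.
  intros Hr [Hx [C HC]]. assert (HC0 : 0 <= C) by (destruct Hne as [i0]; specialize (HC i0); specialize (Hx i0); 
    eapply Rle_trans; [apply Rabs_pos|apply HC]).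
  assert (Hb : bdd x C) by (intros j; split; auto; eapply Rle_trans; [apply Rle_abs|apply HC]).
  destruct (Gr_bnd C HC0) as [B [HB0 HB]]. split.
  - intros i. eapply Rle_trans; [apply Hr|apply T_ge].
  - exists (Rmax r B). intros i. unfold T, vmax, vconst.
    destruct (HB x Hb i). rewrite Rabs_pos_eq. apply Rle_max_compat_l; auto.
    eapply Rle_trans; [apply Hr|apply Rmax_l].
Qed.

End Rho.

End Model.

Section Fix.
Context {I : Type} (Hne : inhabited I) (Ii : I -> list I) (gam : I -> I -> R -> R)
  (mu : I -> (I -> R) -> Rbar) (HG : gain_operator Ii gam mu)
  (rho : R -> R) (Hrho : Kinf rho) (phi : R -> R) (Hphi : Kinf phi)
  (Hmbi : forall s b, linf_pos s -> linf_pos b -> vle s (vmax b (Gam_rho Ii gam mu rho s)) ->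
      supnorm s <= phi (supnorm b))
  (Hfix : forall r, 0 <= r -> glob_attr_fixed_point (T Ii gam mu rho r) (sigma_star Ii gam mu rho r)).

Definition s (r : R) : I -> R := sigma_star Ii gam mu rho r.
Definition TT r := T Ii gam mu rho r.

Lemma s_linf r : 0 <= r -> linf_pos (s r).
Proof. intros Hr. apply (Hfix r Hr). Qed.

Lemma s_fix r : 0 <= r -> TT r (s r) = s r.
Proof. intros Hr. apply (Hfix r Hr). Qed.

Lemma linf_nn (x : I -> R) : linf_pos x -> nn x.
Proof. intros [H _]. exact H. Qed.

Lemma iter_linf r n (x : I -> R) : 0 <= r -> linf_pos x -> linf_pos (Nat.iter n (TT r) x).
Proof.
  intros Hr Hx. induction n; simpl; auto. apply (T_linf Hne Ii gam mu HG rho Hrho); auto.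
Qed.

Lemma iter_mono r n (x y : I -> R) : 0 <= r -> linf_pos x -> vle x y -> vle (Nat.iter n (TT r) x) (Nat.iter n (TT r) y).
Proof.
  intros Hr Hx Hxy. induction n; simpl; auto. apply (T_mono Ii gam mu HG rho Hrho); auto.
  apply linf_nn, iter_linf; auto.
Qed.

Lemma iter_below r n (x : I -> R) : 0 <= r -> linf_pos x -> vle (TT r x) x -> vle (Nat.iter n (TT r) x) x.
Proof.
  intros Hr Hx Hxx. induction n; simpl. intros i; lra.
  intros i. eapply Rle_trans; [|apply (Hxx i)]. apply (T_mono Ii gam mu HG rho Hrho); auto.
  apply linf_nn, iter_linf; auto.
Qed.

Lemma iter_above r n (x : I -> R) : 0 <= r -> linf_pos x -> vle x (TT r x) -> vle x (Nat.iter n (TT r) x).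
Proof.
  intros Hr Hx Hxx. induction n; simpl. intros i; lra.
  intros i. eapply Rle_trans; [apply (Hxx i)|]. apply (T_mono Ii gam mu HG rho Hrho); auto.
  apply linf_nn; auto.
Qed.

Lemma iter_fix r n : 0 <= r -> Nat.iter n (TT r) (s r) = s r.
Proof. intros Hr. induction n; simpl; auto. rewrite IHn. apply s_fix; auto. Qed.

Lemma s_attr r : 0 <= r -> forall x, linf_pos x -> forall eps, 0 < eps ->
  exists N : nat, forall i, Rabs (Nat.iter N (TT r) x i - s r i) < eps.
Proof.
  intros Hr x Hx eps He. destruct (Hfix r Hr) as [_ [_ Hat]].
  destruct (Hat x Hx eps He) as [N HN]. exists N. intros i.
  specialize (HN N (Nat.le_refl N)).
  eapply Rle_lt_trans; [|apply HN].
  apply (supnorm_comp (vsub (Nat.iter N (TT r) x) (s r))).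
  destruct (iter_linf r N x Hr Hx) as [_ [C1 HC1]]. destruct (s_linf r Hr) as [_ [C2 HC2]].
  exists (C1 + C2). intros j. unfold vsub. eapply Rle_trans; [apply Rabs_triang|].
  rewrite Rabs_Ropp. specialize (HC1 j). specialize (HC2 j). lra.
Qed.

Lemma s_fix_pt r i : 0 <= r -> TT r (s r) i = s r i.
Proof. intros Hr. rewrite s_fix; auto. Qed.

Lemma s_ge r : 0 <= r -> forall i, r <= s r i.
Proof. intros Hr i. rewrite <- (s_fix r Hr). apply T_ge. Qed.

Lemma s_nn r : 0 <= r -> nn (s r).
Proof. intros Hr i. assert (H := s_ge r Hr i). lra. Qed.

Lemma s_decay r : 0 <= r -> forall i, Gam_rho Ii gam mu rho (s r) i <= s r i.
Proof.
  intros Hr i. assert (H : TT r (s r) i = s r i) by (rewrite s_fix; auto).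
  rewrite <- H. unfold TT, T, vmax. apply Rmax_r.
Qed.

Lemma s_le_phi r : 0 <= r -> forall i, s r i <= phi r.
Proof.
  intros Hr i. assert (H := Hmbi (s r) (vconst r) (s_linf r Hr)).
  rewrite supnorm_const in H by auto.
  eapply Rle_trans; [apply (linf_bound (s r) (s_linf r Hr))|]. apply H.
  - split. intros j; unfold vconst; auto. exists r. intros j; unfold vconst; rewrite Rabs_pos_eq; lra.
  - intros j. assert (E := s_fix r Hr). unfold TT, T in E. rewrite E. lra.
Qed.

Lemma phi_ge r : 0 <= r -> r <= phi r.
Proof. intros Hr. destruct Hne as [i0]. eapply Rle_trans; [apply (s_ge r Hr i0)|apply s_le_phi; auto]. Qed.

Lemma s_mono r q : 0 <= r -> r <= q -> forall i, s r i <= s q i.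
Proof.
  intros Hr Hrq i. apply Rnot_lt_le. intros Hlt.
  assert (Hq : 0 <= q) by lra.
  assert (Hb : vle (TT r (s q)) (s q)).
  { intros j. eapply Rle_trans; [apply (T_r_mono Ii gam mu rho r q (s q) Hrq j)|]. apply Req_le, s_fix_pt; auto. }
  destruct (s_attr r Hr (s q) (s_linf q Hq) (s r i - s q i) ltac:(lra)) as [N HN].
  specialize (HN i). assert (H := iter_below r N (s q) Hr (s_linf q Hq) Hb i).
  apply Rabs_def2 in HN. lra.
Qed.

Lemma s_0 i : s 0 i = 0.
Proof.
  assert (H1 := s_ge 0 (Rle_refl 0) i). assert (H2 := s_le_phi 0 (Rle_refl 0) i).
  rewrite (Kinf_0 _ Hphi) in H2. lra.
Qed.

Lemma s_bdd r q : 0 <= q -> q <= r -> bdd (s q) (phi r).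
Proof.
  intros Hq Hqr j. split. apply s_nn; auto.
  eapply Rle_trans; [apply s_le_phi; auto|]. apply (Kinf_mono _ Hphi); auto.
Qed.

Lemma right_claim r : 0 <= r -> forall n, forall eta, 0 < eta -> exists th, 0 < th /\
  forall q, r <= q <= r + 1 -> q < r + th -> forall i, s q i - eta <= Nat.iter n (TT r) (s q) i.
Proof.
  intros Hr n. induction n as [|n IH]; intros eta He.
  - exists 1. split; [lra|]. intros q Hq Hqt i. simpl. lra.
  - assert (HR : 0 <= phi (r + 1)) by (apply (Kinf_nonneg _ Hphi); lra).
    destruct (Gr_unif Hne Ii gam mu HG rho Hrho (phi (r+1)) HR (eta/2) ltac:(lra)) as [d [Hd Hd']].
    destruct (IH d Hd) as [th [Hth Hth']].
    exists (Rmin th (eta/2)). split. apply Rmin_pos; lra.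
    intros q Hq Hqt i. assert (Hq0 : 0 <= q) by lra.
    set (y := Nat.iter n (TT r) (s q)).
    assert (Hb : vle (TT r (s q)) (s q)).
    { intros j. eapply Rle_trans; [apply (T_r_mono Ii gam mu rho r q (s q) ltac:(lra) j)|]. apply Req_le, s_fix_pt; auto. }
    assert (Hyz : vle y (s q)) by (apply iter_below; auto; apply s_linf; auto).
    assert (Hy0 : nn y) by (apply linf_nn, iter_linf; auto; apply s_linf; auto).
    assert (Hzb := s_bdd (r+1) q Hq0 ltac:(lra)).
    assert (Hyb : bdd y (phi (r+1))) by (intros j; split; auto; eapply Rle_trans; [apply Hyz|apply Hzb]).
    assert (Hcl : forall j, Rabs (y j - s q j) <= d).
    { intros j. assert (H1 := Hth' q Hq ltac:(eapply Rlt_le_trans; [apply Hqt|]; assert (Rmin th (eta/2) <= th) by apply Rmin_l; lra) j).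
      fold y in H1. specialize (Hyz j). rewrite Rabs_left1 by lra. lra. }
    assert (H1 := Hd' y (s q) Hyb Hzb Hcl i).
    assert (H2 := T_lip Ii gam mu rho r y (s q) i).
    assert (H3 := T_r_lip Ii gam mu rho r q (s q) ltac:(lra) i).
    fold (TT q) in H3. rewrite (s_fix q Hq0) in H3.
    assert (Hmin : Rmin th (eta/2) <= eta/2) by apply Rmin_r.
    simpl. fold y. unfold TT in *. assert (H4 := Rle_trans _ _ _ H2 H1). apply Rabs_le_between in H4.
    lra.
Qed.

Lemma left_claim r : 0 <= r -> forall n, forall eta, 0 < eta -> exists th, 0 < th /\
  forall q, 0 <= q <= r -> r - th < q -> forall i, Nat.iter n (TT r) (s q) i <= s q i + eta.
Proof.
  intros Hr n. induction n as [|n IH]; intros eta He.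
  - exists 1. split; [lra|]. intros q Hq Hqt i. simpl. lra.
  - assert (HR : 0 <= phi r) by (apply (Kinf_nonneg _ Hphi); lra).
    destruct (Gr_unif Hne Ii gam mu HG rho Hrho (phi r) HR (eta/2) ltac:(lra)) as [d [Hd Hd']].
    destruct (IH d Hd) as [th [Hth Hth']].
    exists (Rmin th (eta/2)). split. apply Rmin_pos; lra.
    intros q Hq Hqt i.
    set (y := Nat.iter n (TT r) (s q)).
    assert (Ha : vle (s q) (TT r (s q))).
    { intros j. eapply Rle_trans; [|apply (T_r_mono Ii gam mu rho q r (s q) ltac:(lra) j)]. apply Req_le; symmetry; apply s_fix_pt; lra. }
    assert (Hyz : vle (s q) y) by (apply iter_above; auto; apply s_linf; lra).
    assert (Hyr : vle y (s r)).
    { rewrite <- (iter_fix r n Hr). apply iter_mono; auto. apply s_linf; lra.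
      intros j; apply s_mono; lra. }
    assert (Hzb := s_bdd r q (proj1 Hq) (proj2 Hq)).
    assert (Hyb : bdd y (phi r)).
    { intros j. split. eapply Rle_trans; [apply (proj1 (Hzb j))|apply Hyz].
      eapply Rle_trans; [apply Hyr|apply (s_le_phi r Hr)]. }
    assert (Hcl : forall j, Rabs (y j - s q j) <= d).
    { intros j. assert (H1 := Hth' q Hq ltac:(assert (Rmin th (eta/2) <= th) by apply Rmin_l; lra) j).
      fold y in H1. specialize (Hyz j). rewrite Rabs_pos_eq by lra. lra. }
    assert (H1 := Hd' y (s q) Hyb Hzb Hcl i).
    assert (H2 := T_lip Ii gam mu rho r y (s q) i).
    assert (H3 := T_r_lip Ii gam mu rho q r (s q) ltac:(lra) i).
    fold (TT q) in H3. rewrite (s_fix q (proj1 Hq)) in H3.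
    assert (Hmin : Rmin th (eta/2) <= eta/2) by apply Rmin_r.
    simpl. fold y. unfold TT in *. assert (H4 := Rle_trans _ _ _ H2 H1). apply Rabs_le_between in H4.
    lra.
Qed.

Lemma s_cont r : 0 <= r -> forall eps, 0 < eps -> exists th, 0 < th /\
  forall q, 0 <= q -> Rabs (q - r) < th -> forall i, Rabs (s q i - s r i) <= eps.
Proof.
  intros Hr eps He.
  assert (Hr1 : 0 <= r + 1) by lra.
  destruct (s_attr r Hr (s (r+1)) (s_linf _ Hr1) (eps/2) ltac:(lra)) as [N1 HN1].
  destruct (right_claim r Hr N1 (eps/2) ltac:(lra)) as [th1 [Hth1 Hth1']].
  assert (H00 : linf_pos (s 0)) by (apply s_linf; lra).
  destruct (s_attr r Hr (s 0) H00 (eps/2) ltac:(lra)) as [N2 HN2].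
  destruct (left_claim r Hr N2 (eps/2) ltac:(lra)) as [th2 [Hth2 Hth2']].
  exists (Rmin 1 (Rmin th1 th2)). split. repeat apply Rmin_pos; lra.
  intros q Hq Hqr i.
  assert (Hm1 : Rmin 1 (Rmin th1 th2) <= 1) by apply Rmin_l.
  assert (Hm2 : Rmin 1 (Rmin th1 th2) <= th1) by (eapply Rle_trans; [apply Rmin_r|apply Rmin_l]).
  assert (Hm3 : Rmin 1 (Rmin th1 th2) <= th2) by (eapply Rle_trans; [apply Rmin_r|apply Rmin_r]).
  apply Rabs_def2 in Hqr. destruct Hqr as [Hqa Hqb].
  destruct (Rle_dec r q) as [Hrq|Hrq].
  - assert (H1 := Hth1' q ltac:(lra) ltac:(lra) i).
    assert (H2 : vle (Nat.iter N1 (TT r) (s q)) (Nat.iter N1 (TT r) (s (r+1)))).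
    { apply iter_mono; auto. apply s_linf; lra. intros j; apply s_mono; lra. }
    specialize (H2 i). specialize (HN1 i). apply Rabs_def2 in HN1.
    assert (H3 := s_mono r q Hr Hrq i).
    rewrite Rabs_pos_eq by lra. lra.
  - assert (H1 := Hth2' q ltac:(lra) ltac:(lra) i).
    assert (H2 : vle (Nat.iter N2 (TT r) (s 0)) (Nat.iter N2 (TT r) (s q))).
    { apply iter_mono; auto. intros j; apply s_mono; lra. }
    specialize (H2 i). specialize (HN2 i). apply Rabs_def2 in HN2.
    assert (H3 := s_mono q r Hq ltac:(lra) i).
    rewrite Rabs_left1 by lra. lra.
Qed.

Lemma s_ucont b : 0 <= b -> forall eps, 0 < eps -> exists w, 0 < w /\
  forall u v, 0 <= u <= b -> 0 <= v <= b -> Rabs (u - v) < w -> forall i, Rabs (s u i - s v i) <= eps.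
Proof.
  intros Hb eps He.
  assert (HU := UEC (fun (i : I) t => s t i) 0 b).
  destruct HU with (eps := eps) as [w [Hw Hw']]; auto.
  - intros x Hx e He'. destruct (s_cont x (proj1 Hx) e He') as [th [Hth Hth']].
    exists th. split; auto. intros y Hy Hyx al. apply Hth'; auto. lra.
  - exists w. split; auto.
Qed.

End Fix.

Definition hi (k : nat) (x : R) := Rmin (Rmax x (INR k + 1)) (INR k + 2) - (INR k + 1).
Definition lo (k : nat) (x : R) := Rmin (Rmax x (/(INR k + 2))) (/(INR k + 1)) - /(INR k + 1).

Definition FN (N : nat) (p q : nat -> R) (x : R) := sumk N (fun k => p k * hi k x + q k * lo k x).

Definition Nb (x : R) : nat := Z.to_nat (up (x + / x)).

Definition F (p q : nat -> R) (x : R) := FN (Nb x) p q x.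

Definition valid (N : nat) (x : R) := 0 < x /\ x <= INR N + 1 /\ / x <= INR N + 1.

Lemma inv_le_mono a b : 0 < a -> a <= b -> / b <= / a.
Proof. intros. apply Rinv_le_contravar; lra. Qed.

Lemma INRp1_pos k : 0 < INR k + 1.
Proof. assert (H := pos_INR k). lra. Qed.

Lemma hi_zero k x : x <= INR k + 1 -> hi k x = 0.
Proof. intros H. unfold hi, Rmin, Rmax. repeat destruct Rle_dec; lra. Qed.

Lemma lo_zero k x : / (INR k + 1) <= x -> lo k x = 0.
Proof.
  intros H. assert (H1 := INRp1_pos k). assert (/(INR k + 2) <= /(INR k + 1)) by (apply inv_le_mono; lra).
  unfold lo, Rmin, Rmax. repeat destruct Rle_dec; lra.
Qed.

Lemma FN_stable N x p q : valid N x -> forall M, (N <= M)%nat -> FN M p q x = FN N p q x.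
Proof.
  intros [Hx [H1 H2]] M HM. induction HM as [|m HM IH]; auto. unfold FN in *. simpl. rewrite IH.
  assert (Hm := le_INR _ _ HM).
  assert (E1 : hi m x = 0) by (apply hi_zero; lra).
  assert (E2 : lo m x = 0).
  { apply lo_zero. rewrite <- (Rinv_inv x). apply inv_le_mono. apply Rinv_0_lt_compat; lra. lra. }
  rewrite E1, E2. ring.
Qed.

Lemma Nb_valid x : 0 < x -> valid (Nb x) x.
Proof.
  intros Hx. destruct (archimed (x + / x)) as [H1 _].
  assert (Hix : 0 < / x) by (apply Rinv_0_lt_compat; lra).
  assert (Hz : (0 <= up (x + / x))%Z) by (apply le_IZR; lra).
  unfold Nb, valid. rewrite INR_IZR_INZ, Z2Nat.id by auto. split; auto. lra.
Qed.

Lemma valid_mono N M x : valid N x -> (N <= M)%nat -> valid M x.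
Proof. intros [H0 [H1 H2]] HM. assert (H := le_INR _ _ HM). split; auto. lra. Qed.

Lemma F_eq N p q x : valid N x -> F p q x = FN N p q x.
Proof.
  intros Hv. unfold F. assert (Hv' := Nb_valid x (proj1 Hv)).
  rewrite <- (FN_stable (Nb x) x p q Hv' (max N (Nb x))) by lia.
  apply FN_stable; auto. lia.
Qed.

Lemma hi_sum N x : sumk N (fun k => hi k x) = Rmin (Rmax x 1) (INR N + 1) - 1.
Proof.
  induction N; cbn [sumk].
  - simpl INR. unfold Rmin, Rmax. repeat destruct Rle_dec; lra.
  - rewrite IHN. unfold hi. rewrite S_INR. assert (H := pos_INR N).
    replace (INR N + 1 + 1) with (INR N + 2) by ring.
    unfold Rmin, Rmax. repeat destruct Rle_dec; lra.
Qed.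

Lemma lo_sum N x : sumk N (fun k => lo k x) = Rmin (Rmax x (/ (INR N + 1))) 1 - 1.
Proof.
  induction N; cbn [sumk].
  - simpl INR. replace (0 + 1) with 1 by ring. rewrite Rinv_1. unfold Rmin, Rmax. repeat destruct Rle_dec; lra.
  - rewrite IHN. unfold lo. rewrite S_INR.
    assert (H := INRp1_pos N).
    replace (INR N + 1 + 1) with (INR N + 2) by ring.
    assert (H2 : / (INR N + 2) <= / (INR N + 1)) by (apply inv_le_mono; lra).
    assert (H3 : / (INR N + 1) <= 1) by (rewrite <- Rinv_1; apply inv_le_mono; [lra|]; assert (H4 := pos_INR N); lra).
    assert (H5 : 0 < / (INR N + 2)) by (apply Rinv_0_lt_compat; lra).
    unfold Rmin, Rmax. repeat destruct Rle_dec; lra.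
Qed.

Lemma sum_D N x y : valid N x -> valid N y ->
  (sumk N (fun k => hi k y) - sumk N (fun k => hi k x)) + (sumk N (fun k => lo k y) - sumk N (fun k => lo k x)) = y - x.
Proof.
  intros [Hx [Hx1 Hx2]] [Hy [Hy1 Hy2]]. rewrite !hi_sum, !lo_sum.
  assert (H := INRp1_pos N).
  assert (Hxa : / (INR N + 1) <= x) by (rewrite <- (Rinv_inv x); apply inv_le_mono; [apply Rinv_0_lt_compat|]; lra).
  assert (Hya : / (INR N + 1) <= y) by (rewrite <- (Rinv_inv y); apply inv_le_mono; [apply Rinv_0_lt_compat|]; lra).
  assert (H3 : / (INR N + 1) <= 1) by (rewrite <- Rinv_1; apply inv_le_mono; [lra|]; assert (H4 := pos_INR N); lra).
  unfold Rmin, Rmax. repeat destruct Rle_dec; lra.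
Qed.

Definition touch_hi k x y := x < INR k + 2 /\ INR k + 1 < y.
Definition touch_lo k x y := x < / (INR k + 1) /\ / (INR k + 2) < y.

Lemma hi_diff k x y : x <= y -> 0 <= hi k y - hi k x <= 1 /\ (hi k y - hi k x <> 0 -> touch_hi k x y).
Proof. intros H. unfold hi, touch_hi, Rmin, Rmax. repeat destruct Rle_dec; split; try lra; intros; lra. Qed.

Lemma lo_diff k x y : 0 < x -> x <= y -> 0 <= lo k y - lo k x <= 1 /\ (lo k y - lo k x <> 0 -> touch_lo k x y).
Proof.
  intros H0 H. assert (H1 := INRp1_pos k).
  assert (H2 : / (INR k + 2) <= / (INR k + 1)) by (apply inv_le_mono; lra).
  assert (H3 : / (INR k + 1) <= 1) by (rewrite <- Rinv_1; apply inv_le_mono; [lra|]; assert (H4 := pos_INR k); lra).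
  assert (H5 : 0 < / (INR k + 2)) by (apply Rinv_0_lt_compat; lra).
  unfold lo, touch_lo, Rmin, Rmax. repeat destruct Rle_dec; split; try lra; intros; lra.
Qed.

Lemma FN_diff N p q x y : FN N p q y - FN N p q x =
  sumk N (fun k => p k * (hi k y - hi k x) + q k * (lo k y - lo k x)).
Proof.
  unfold FN. rewrite <- sumk_minus. apply sumk_ext. intros. ring.
Qed.

Lemma FN_lower N p q x y m : 0 < x -> x <= y ->
  (forall k, (k < N)%nat -> touch_hi k x y -> m <= p k) ->
  (forall k, (k < N)%nat -> touch_lo k x y -> m <= q k) ->
  m * ((sumk N (fun k => hi k y) - sumk N (fun k => hi k x)) + (sumk N (fun k => lo k y) - sumk N (fun k => lo k x)))
  <= FN N p q y - FN N p q x.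
Proof.
  intros Hx Hxy Hp Hq. rewrite FN_diff, <- !sumk_minus, <- sumk_plus, <- sumk_scal.
  apply sumk_le. intros k Hk.
  destruct (hi_diff k x y Hxy) as [[H1 H2] H3]. destruct (lo_diff k x y Hx Hxy) as [[H4 H5] H6].
  assert (A : m * (hi k y - hi k x) <= p k * (hi k y - hi k x)).
  { destruct (Req_dec (hi k y - hi k x) 0) as [E|E]. rewrite E; lra.
    apply Rmult_le_compat_r; auto. }
  assert (B : m * (lo k y - lo k x) <= q k * (lo k y - lo k x)).
  { destruct (Req_dec (lo k y - lo k x) 0) as [E|E]. rewrite E; lra.
    apply Rmult_le_compat_r; auto. }
  lra.
Qed.

Lemma FN_upper N p q x y M : 0 < x -> x <= y ->
  (forall k, (k < N)%nat -> touch_hi k x y -> p k <= M) ->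
  (forall k, (k < N)%nat -> touch_lo k x y -> q k <= M) ->
  FN N p q y - FN N p q x <=
  M * ((sumk N (fun k => hi k y) - sumk N (fun k => hi k x)) + (sumk N (fun k => lo k y) - sumk N (fun k => lo k x))).
Proof.
  intros Hx Hxy Hp Hq. rewrite FN_diff, <- !sumk_minus, <- sumk_plus, <- sumk_scal.
  apply sumk_le. intros k Hk.
  destruct (hi_diff k x y Hxy) as [[H1 H2] H3]. destruct (lo_diff k x y Hx Hxy) as [[H4 H5] H6].
  assert (A : p k * (hi k y - hi k x) <= M * (hi k y - hi k x)).
  { destruct (Req_dec (hi k y - hi k x) 0) as [E|E]. rewrite E; lra.
    apply Rmult_le_compat_r; auto. }
  assert (B : q k * (lo k y - lo k x) <= M * (lo k y - lo k x)).
  { destruct (Req_dec (lo k y - lo k x) 0) as [E|E]. rewrite E; lra.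
    apply Rmult_le_compat_r; auto. }
  lra.
Qed.

Lemma FN_osc N p q x y B : 0 < x -> x <= y -> 0 <= B ->
  (forall k, (k < N)%nat -> 0 <= p k /\ 0 <= q k) ->
  (forall k, (k < N)%nat -> touch_hi k x y -> p k <= B * / 2 ^ (k + 3)) ->
  (forall k, (k < N)%nat -> touch_lo k x y -> q k <= B * / 2 ^ (k + 3)) ->
  FN N p q y - FN N p q x <= B / 2.
Proof.
  intros Hx Hxy HB Hpq Hp Hq. rewrite FN_diff.
  eapply Rle_trans with (sumk N (fun k => 2 * (B * / 2 ^ (k + 3)))).
  - apply sumk_le. intros k Hk.
    destruct (hi_diff k x y Hxy) as [[H1 H2] H3]. destruct (lo_diff k x y Hx Hxy) as [[H4 H5] H6].
    destruct (Hpq k Hk) as [Hp0 Hq0].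
    assert (Hpos : 0 <= B * / 2 ^ (k + 3)) by (apply Rmult_le_pos; auto; left; apply Rinv_0_lt_compat, pow_lt; lra).
    assert (A : p k * (hi k y - hi k x) <= B * / 2 ^ (k + 3)).
    { destruct (Req_dec (hi k y - hi k x) 0) as [E|E]. rewrite E; lra.
      specialize (Hp k Hk (H3 E)). nra. }
    assert (A2 : q k * (lo k y - lo k x) <= B * / 2 ^ (k + 3)).
    { destruct (Req_dec (lo k y - lo k x) 0) as [E|E]. rewrite E; lra.
      specialize (Hq k Hk (H6 E)). nra. }
    lra.
  - rewrite sumk_scal, sumk_scal. assert (H := sumk_geom N). nra.
Qed.

Lemma F_diff_lower p q x y m : 0 < x -> x <= y ->
  (forall k, touch_hi k x y -> m <= p k) -> (forall k, touch_lo k x y -> m <= q k) ->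
  m * (y - x) <= F p q y - F p q x.
Proof.
  intros Hx Hxy Hp Hq. set (N := max (Nb x) (Nb y)).
  assert (Hvx : valid N x) by (apply (valid_mono (Nb x)); [apply Nb_valid|]; lia||lra).
  assert (Hvy : valid N y) by (apply (valid_mono (Nb y)); [apply Nb_valid|]; lia||lra).
  rewrite (F_eq N p q x Hvx), (F_eq N p q y Hvy).
  rewrite <- (sum_D N x y Hvx Hvy). apply FN_lower; auto.
Qed.

Lemma F_diff_upper p q x y M : 0 < x -> x <= y ->
  (forall k, touch_hi k x y -> p k <= M) -> (forall k, touch_lo k x y -> q k <= M) ->
  F p q y - F p q x <= M * (y - x).
Proof.
  intros Hx Hxy Hp Hq. set (N := max (Nb x) (Nb y)).
  assert (Hvx : valid N x) by (apply (valid_mono (Nb x)); [apply Nb_valid|]; lia||lra).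
  assert (Hvy : valid N y) by (apply (valid_mono (Nb y)); [apply Nb_valid|]; lia||lra).
  rewrite (F_eq N p q x Hvx), (F_eq N p q y Hvy).
  rewrite <- (sum_D N x y Hvx Hvy). apply FN_upper; auto.
Qed.

Lemma F_diff_osc p q x y B : 0 < x -> x <= y -> 0 <= B ->
  (forall k, 0 <= p k /\ 0 <= q k) ->
  (forall k, touch_hi k x y -> p k <= B * / 2 ^ (k + 3)) ->
  (forall k, touch_lo k x y -> q k <= B * / 2 ^ (k + 3)) ->
  F p q y - F p q x <= B / 2.
Proof.
  intros Hx Hxy HB Hpq Hp Hq. set (N := max (Nb x) (Nb y)).
  assert (Hvx : valid N x) by (apply (valid_mono (Nb x)); [apply Nb_valid|]; lia||lra).
  assert (Hvy : valid N y) by (apply (valid_mono (Nb y)); [apply Nb_valid|]; lia||lra).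
  rewrite (F_eq N p q x Hvx), (F_eq N p q y Hvy). apply FN_osc; auto.
Qed.

Lemma F_mono p q x y : 0 < x -> x <= y -> (forall k, 0 <= p k /\ 0 <= q k) -> F p q x <= F p q y.
Proof.
  intros Hx Hxy Hpq. assert (H := F_diff_lower p q x y 0 Hx Hxy ltac:(intros; apply Hpq) ltac:(intros; apply Hpq)).
  lra.
Qed.

Fixpoint emin (e : nat -> R) (n : nat) : R :=
  match n with O => e O | S m => Rmin (emin e m) (e (S m)) end.
Fixpoint emax (e : nat -> R) (n : nat) : R :=
  match n with O => e O | S m => Rmax (emax e m) (e (S m)) end.

Lemma emin_le e n : emin e n <= e n.
Proof. destruct n; simpl. lra. apply Rmin_r. Qed.

Lemma emin_pos e n : (forall k, 0 < e k) -> 0 < emin e n.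
Proof. intros H. induction n; simpl; auto. apply Rmin_pos; auto. Qed.

Lemma emin_anti e m n : (m <= n)%nat -> emin e n <= emin e m.
Proof. intros H. induction H. lra. simpl. eapply Rle_trans; [apply Rmin_l|auto]. Qed.

Lemma emax_ge e n : e n <= emax e n.
Proof. destruct n; simpl. lra. apply Rmax_r. Qed.

Lemma emax_mono e m n : (m <= n)%nat -> emax e m <= emax e n.
Proof. intros H. induction H. lra. simpl. eapply Rle_trans; [apply IHle|apply Rmax_l]. Qed.

Lemma nat_above x : exists n : nat, x <= INR n.
Proof.
  destruct (archimed (Rabs x)) as [H _]. assert (Hz : (0 <= up (Rabs x))%Z).
  { apply le_IZR. assert (H0 := Rabs_pos x). lra. }
  exists (Z.to_nat (up (Rabs x))). rewrite INR_IZR_INZ, Z2Nat.id by auto.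
  assert (H1 := Rle_abs x). lra.
Qed.

Lemma finite_min (f : nat -> R) : (forall k, 0 < f k) -> forall Km, exists l, 0 < l /\ forall k, (k <= Km)%nat -> l <= f k.
Proof.
  intros H Km. exists (emin f Km). split. apply emin_pos; auto.
  intros k Hk. eapply Rle_trans; [apply (emin_anti f k Km Hk)|apply emin_le].
Qed.

Lemma INR_le_nat m n : INR m <= INR n -> (m <= n)%nat.
Proof. apply INR_le. Qed.

Lemma lip_chain (f : R -> R) a b L : 0 < a ->
  (forall x y, a <= x -> x <= y -> y <= b -> y <= 3 * x / 2 -> f y - f x <= L * (y - x)) ->
  forall x y, a <= x -> x <= y -> y <= b -> f y - f x <= L * (y - x).
Proof.
  intros Ha H.
  assert (Hn : forall n : nat, forall x y, a <= x -> x <= y -> y <= b -> y - x <= INR n * (a/2) -> f y - f x <= L * (y - x)).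
  { induction n as [|n IH]; intros x y Hx Hxy Hy Hn.
    - simpl in Hn. replace y with x by lra. ring_simplify. lra.
    - rewrite S_INR in Hn. destruct (Rle_dec (y - x) (a/2)) as [h|h].
      + apply H; auto. lra.
      + set (z := x + a/2). assert (H1 := H x z Hx ltac:(unfold z; lra) ltac:(unfold z; lra) ltac:(unfold z; lra)).
        assert (H2 := IH z y ltac:(unfold z; lra) ltac:(unfold z; lra) Hy ltac:(unfold z; lra)). lra. }
  intros x y Hx Hxy Hy. destruct (nat_above ((y - x) / (a/2))) as [n Hn'].
  apply (Hn n); auto. assert ((y - x) / (a/2) * (a/2) = y - x) by (field; lra).
  assert (0 <= a/2) by lra. nra.
Qed.

Definition rho2 (rho : R -> R) (x : R) := rho x / 2.

Lemma rho2_K rho : Kinf rho -> Kinf (rho2 rho).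
Proof.
  intros [H0 [Hc [Hs Hu]]]. unfold rho2. split; [rewrite H0; lra|]. split; [|split].
  - intros x Hx eps He. destruct (Hc x Hx (2*eps) ltac:(lra)) as [d [Hd Hd']].
    exists d. split; auto. intros y Hy Hyx. specialize (Hd' y Hy Hyx).
    replace (rho y / 2 - rho x / 2) with ((rho y - rho x) / 2) by field.
    rewrite Rabs_div, (Rabs_pos_eq 2) by lra. lra.
  - intros x y Hx Hxy. specialize (Hs x y Hx Hxy). lra.
  - intros M. destruct (Hu (2*M)) as [x [Hx Hx']]. exists x. split; auto. lra.
Qed.

Section Constr.
Context {I : Type} (Hne : inhabited I) (Ii : I -> list I) (gam : I -> I -> R -> R)
  (mu : I -> (I -> R) -> Rbar) (HG : gain_operator Ii gam mu)
  (rho : R -> R) (Hrho : Kinf rho) (phi : R -> R) (Hphi : Kinf phi)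
  (Hmbi : forall s b, linf_pos s -> linf_pos b -> vle s (vmax b (Gam_rho Ii gam mu rho s)) ->
      supnorm s <= phi (supnorm b))
  (Hfix : forall r, 0 <= r -> glob_attr_fixed_point (T Ii gam mu rho r) (sigma_star Ii gam mu rho r)).

Let sv := s Ii gam mu rho.
Let sv_ge : forall r, 0 <= r -> forall i, r <= sv r i := s_ge Ii gam mu rho Hfix.
Let sv_phi : forall r, 0 <= r -> forall i, sv r i <= phi r := s_le_phi Hne Ii gam mu rho phi Hmbi Hfix.
Let sv_mono : forall r q, 0 <= r -> r <= q -> forall i, sv r i <= sv q i := s_mono Hne Ii gam mu HG rho Hrho Hfix.
Let sv_uc := s_ucont Hne Ii gam mu HG rho Hrho phi Hphi Hmbi Hfix.
Let phi_ge' : forall r, 0 <= r -> r <= phi r := phi_ge Hne Ii gam mu rho phi Hmbi Hfix.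
Let sv_dec : forall r, 0 <= r -> forall i, Gam_rho Ii gam mu rho (sv r) i <= sv r i := s_decay Ii gam mu rho Hfix.
Let sv_nn : forall r, 0 <= r -> nn (sv r) := s_nn Ii gam mu rho Hfix.

Definition Valid (a eta : R) := forall t, a <= t -> forall sg : I -> R,
  (forall j, sv t j - eta <= sg j <= sv t j) -> forall i, Gam_rho Ii gam mu (rho2 rho) sg i <= sg i.

Lemma Valid_down a eta eta' : Valid a eta -> 0 < eta' <= eta -> Valid a eta'.
Proof. intros H Heta t Ht sg Hsg. apply (H t Ht sg). intros j; specialize (Hsg j); lra. Qed.

Lemma decay_close a : 0 < a -> exists eta, 0 < eta /\ eta <= a / 2 /\ Valid a eta.
Proof.
  intros Ha. destruct (Kinf_small rho Hrho (a/4) ltac:(lra)) as [d [Hd Hd']].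
  set (h := Rmin d (a/4)).
  assert (Hh : 0 < h) by (apply Rmin_pos; lra).
  assert (Hhd : h <= d) by apply Rmin_r || apply Rmin_l.
  assert (Hha : h <= a/4) by apply Rmin_r.
  assert (Hrh : rho h <= a/4) by (apply Hd'; lra).
  assert (Hrh0 : 0 < rho h) by (apply (Kinf_pos rho Hrho); auto).
  exists (Rmin (rho h / 2) (a/2)). split; [apply Rmin_pos; lra|]. split; [apply Rmin_r|].
  intros t Ht sg Hsg i.
  assert (Hm1 : Rmin (rho h / 2) (a/2) <= rho h / 2) by apply Rmin_l.
  assert (Hm2 : Rmin (rho h / 2) (a/2) <= a / 2) by apply Rmin_r.
  assert (Hsgnn : nn sg).
  { intros j. specialize (Hsg j). assert (H := sv_ge t ltac:(lra) j). lra. }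
  assert (Hle : vle sg (sv t)) by (intros j; apply Hsg).
  assert (Hg := G_mono Ii gam mu HG sg (sv t) Hsgnn Hle i).
  assert (Hg0 := G_nonneg Ii gam mu HG sg Hsgnn i).
  assert (Hdec := sv_dec t ltac:(lra) i). rewrite Gr_eq in Hdec.
  unfold Gam_rho, rho2. set (g := Gam Ii gam mu sg i) in *. set (h' := Gam Ii gam mu (sv t) i) in *.
  assert (Hrg : rho g <= rho h') by (apply (Kinf_mono rho Hrho); auto).
  destruct (Rle_dec h h') as [Hhh|Hhh].
  - assert (rho h <= rho h') by (apply (Kinf_mono rho Hrho); lra).
    specialize (Hsg i). lra.
  - assert (rho g <= rho h) by (apply (Kinf_mono rho Hrho); lra).
    specialize (Hsg i). assert (Hsv := sv_ge t ltac:(lra) i). lra.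
Qed.

Lemma ex_e : exists e : nat -> R, forall n, 0 < e n /\ e n <= / (INR n + 1) / 2 /\ Valid (/ (INR n + 1)) (e n).
Proof.
  apply (my_choice (fun n eta => 0 < eta /\ eta <= / (INR n + 1) / 2 /\ Valid (/ (INR n + 1)) eta)).
  intros n. apply decay_close. apply Rinv_0_lt_compat, INRp1_pos.
Qed.

Variable e0 : nat -> R.
Hypothesis He0 : forall n, 0 < e0 n /\ e0 n <= / (INR n + 1) / 2 /\ Valid (/ (INR n + 1)) (e0 n).

Definition ee n := emin e0 n.

Lemma ee_pos n : 0 < ee n.
Proof. apply emin_pos. intros k; apply He0. Qed.

Lemma ee_small n : ee n <= / (INR n + 1) / 2.
Proof. eapply Rle_trans; [apply emin_le|apply He0]. Qed.

Lemma ee_valid n : Valid (/ (INR n + 1)) (ee n).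
Proof. apply (Valid_down _ (e0 n)). apply He0. split. apply ee_pos. apply emin_le. Qed.

Lemma ee_anti m n : (m <= n)%nat -> ee n <= ee m.
Proof. apply emin_anti. Qed.

Lemma ex_w : exists w : nat -> R, forall n, 0 < w n /\ forall u v, 0 <= u <= INR n + 1 -> 0 <= v <= INR n + 1 ->
  Rabs (u - v) < w n -> forall i, Rabs (sv u i - sv v i) <= ee n / 2.
Proof.
  apply (my_choice (fun n wn => 0 < wn /\ forall u v, 0 <= u <= INR n + 1 -> 0 <= v <= INR n + 1 ->
  Rabs (u - v) < wn -> forall i, Rabs (sv u i - sv v i) <= ee n / 2)).
  intros n. apply sv_uc. apply Rlt_le, INRp1_pos.
  assert (H := ee_pos n). lra.
Qed.

Variable w : nat -> R.
Hypothesis Hw : forall n, 0 < w n /\ forall u v, 0 <= u <= INR n + 1 -> 0 <= v <= INR n + 1 ->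
  Rabs (u - v) < w n -> forall i, Rabs (sv u i - sv v i) <= ee n / 2.

Definition Sn n := phi (INR n + 1) * (/ w n + 4 * (INR n + 1)) + 1.
Definition S' n := emax Sn n.
Definition pK k := S' (2 * k + 4).
Definition K := F pK pK.

Lemma Sn_pos n : 1 <= Sn n.
Proof.
  unfold Sn. assert (H1 := Kinf_nonneg phi Hphi (INR n + 1) ltac:(apply Rlt_le, INRp1_pos)).
  assert (H2 : 0 < / w n) by (apply Rinv_0_lt_compat, Hw). assert (H3 := INRp1_pos n).
  assert (0 <= phi (INR n + 1) * (/ w n + 4 * (INR n + 1))) by (apply Rmult_le_pos; lra). lra.
Qed.

Lemma pK_ge k : 1 <= pK k.
Proof. unfold pK, S'. eapply Rle_trans; [apply (Sn_pos 0)|]. eapply Rle_trans; [apply (emax_ge Sn 0)|].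
  apply emax_mono. lia. Qed.

Lemma ex_ML : exists ML : nat -> nat, forall k u, 0 < u -> / (INR k + 2) < 2 * phi u -> 2 / u <= INR (ML k).
Proof.
  apply (my_choice (fun k M => forall u, 0 < u -> / (INR k + 2) < 2 * phi u -> 2 / u <= INR M)). intros k.
  assert (Hk : 0 < INR k + 2) by (assert (H := pos_INR k); lra).
  destruct (Kinf_small phi Hphi (/ (INR k + 2) / 2) ltac:(apply Rmult_lt_0_compat; [apply Rinv_0_lt_compat|]; lra))
    as [d [Hd Hd']].
  destruct (nat_above (2 / d)) as [M HM]. exists M. intros u Hu Hphu.
  destruct (Rle_dec u d) as [h|h].
  - specialize (Hd' u ltac:(lra) h). lra.
  - eapply Rle_trans; [|apply HM]. unfold Rdiv. apply Rmult_le_compat_l; [lra|]. apply inv_le_mono; lra.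
Qed.

Variable ML : nat -> nat.
Hypothesis HML : forall k u, 0 < u -> / (INR k + 2) < 2 * phi u -> 2 / u <= INR (ML k).

Definition cC k := Rmin (/2) (ee (2 * k + 4 + ML O) * / 2 ^ (k + 3)).
Definition dC k := Rmin (/2) (ee (2 + ML k) * / 2 ^ (k + 3)).
Definition C := F cC dC.

Lemma pow2_pos k : 0 < / 2 ^ (k + 3).
Proof. apply Rinv_0_lt_compat, pow_lt; lra. Qed.

Lemma cC_pos k : 0 < cC k /\ cC k <= /2.
Proof. unfold cC. split. apply Rmin_pos. lra. apply Rmult_lt_0_compat. apply ee_pos. apply pow2_pos. apply Rmin_l. Qed.

Lemma dC_pos k : 0 < dC k /\ dC k <= /2.
Proof. unfold dC. split. apply Rmin_pos. lra. apply Rmult_lt_0_compat. apply ee_pos. apply pow2_pos. apply Rmin_l. Qed.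

Lemma C_w k : 0 <= cC k /\ 0 <= dC k.
Proof. split; [apply Rlt_le, cC_pos|apply Rlt_le, dC_pos]. Qed.

Lemma C_slope x y : 0 < x -> x <= y -> C y - C x <= (y - x) / 2.
Proof.
  intros Hx Hxy. unfold C. assert (H := F_diff_upper cC dC x y (/2) Hx Hxy
    ltac:(intros; apply cC_pos) ltac:(intros; apply dC_pos)). lra.
Qed.

Lemma C_mono x y : 0 < x -> x <= y -> C x <= C y.
Proof. intros Hx Hxy. apply F_mono; auto. apply C_w. Qed.

Lemma inv_pos' x : 0 < x -> 0 < / x.
Proof. apply Rinv_0_lt_compat. Qed.

Lemma phi_pos u : 0 < u -> u <= phi u.
Proof. intros. apply phi_ge'. lra. Qed.

Lemma C_osc u : 0 < u -> forall m, INR m <= 2 * Rmax u (/ u) -> C (2 * phi u) - C u <= ee m / 2.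
Proof.
  intros Hu m Hm. assert (Hpu := phi_pos u Hu).
  unfold C. apply F_diff_osc; auto. lra. apply Rlt_le, ee_pos. apply C_w.
  - intros k [Hk1 Hk2]. unfold cC. eapply Rle_trans; [apply Rmin_r|].
    apply Rmult_le_compat_r. apply Rlt_le, pow2_pos. apply ee_anti.
    apply INR_le_nat. rewrite plus_INR, plus_INR, mult_INR. simpl INR.
    assert (HM := HML 0 u Hu ltac:(simpl INR; assert (H := pos_INR k); lra)).
    assert (H0 := pos_INR (ML 0)). assert (H1 := pos_INR k).
    unfold Rmax in Hm. destruct Rle_dec. unfold Rdiv in HM. lra. lra.
  - intros k [Hk1 Hk2]. unfold dC. eapply Rle_trans; [apply Rmin_r|].
    apply Rmult_le_compat_r. apply Rlt_le, pow2_pos. apply ee_anti.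
    apply INR_le_nat. rewrite plus_INR. simpl INR.
    assert (HM := HML k u Hu Hk2).
    assert (H0 := pos_INR (ML k)). assert (H1 := pos_INR k).
    assert (H2 : / (INR k + 1) <= 1) by (rewrite <- Rinv_1; apply inv_le_mono; lra).
    unfold Rmax in Hm. destruct Rle_dec. unfold Rdiv in HM. lra. lra.
Qed.

Definition Est (i : I) (u : R) := fun y => exists v, u <= v /\ y = sv v i - C v.
Definition stil (i : I) (u : R) := real (Glb_Rbar (Est i u)) + C u.

Lemma Est_lb u i : 0 < u -> forall y, Est i u y -> sv u i - C (2 * phi u) <= y.
Proof.
  intros Hu y [v [Huv ->]]. assert (Hpu := phi_pos u Hu).
  assert (Hsu := sv_phi u ltac:(lra) i).
  destruct (Rle_dec v (2 * phi u)) as [h|h].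
  - assert (H1 := sv_mono u v ltac:(lra) Huv i). assert (H2 := C_mono v (2 * phi u) ltac:(lra) h). lra.
  - assert (H1 := sv_ge v ltac:(lra) i). assert (H2 := C_slope (2 * phi u) v ltac:(lra) ltac:(lra)). lra.
Qed.

Lemma stil_bounds u i : 0 < u -> sv u i - (C (2 * phi u) - C u) <= stil i u <= sv u i.
Proof.
  intros Hu. unfold stil.
  destruct (glb_fin (Est i u) (sv u i - C (2 * phi u))) as [_ [H2 H3]].
  - exists (sv u i - C u). exists u. split; auto. lra.
  - apply Est_lb; auto.
  - split. lra. assert (H := H2 (sv u i - C u) ltac:(exists u; split; auto; lra)). lra.
Qed.

Lemma stil_rate u u' i : 0 < u -> u <= u' -> C u' - C u <= stil i u' - stil i u.
Proof.
  intros Hu Huu. unfold stil.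
  assert (H : real (Glb_Rbar (Est i u)) <= real (Glb_Rbar (Est i u'))).
  { apply glb_ge. exists (sv u' i - C u'). exists u'. split; auto; lra.
    intros y [v [Hv ->]]. apply (glb_le _ (sv u i - C (2 * phi u))). apply Est_lb; auto.
    exists v. split; auto. lra. }
  lra.
Qed.

Definition Esig (i : I) (t : R) := fun y => exists u, t/2 <= u <= t /\ y = stil i u + K t - K u.
Definition sig (t : R) (i : I) : R := if Rlt_dec 0 t then real (Glb_Rbar (Esig i t)) else 0.

Definition goodn (n : nat) (t : R) := / (INR n + 1) <= t /\ t <= INR n + 1 /\ INR n <= Rmax t (/ t).

Lemma n_ex t : 0 < t -> exists n, goodn n t.
Proof.
  intros Ht. assert (H0 : 0 <= Rmax t (/ t)) by (eapply Rle_trans; [|apply Rmax_l]; lra).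
  destruct (nfloor_ex _ H0) as [n [Hn1 Hn2]]. exists n.
  assert (Hi : / t < INR n + 1) by (eapply Rle_lt_trans; [apply Rmax_r|exact Hn2]).
  assert (Ht1 : t <= Rmax t (/ t)) by apply Rmax_l.
  split; [|split; [lra|exact Hn1]].
  rewrite <- (Rinv_inv t). left. apply Rinv_lt_contravar; auto.
  apply Rmult_lt_0_compat. apply Rinv_0_lt_compat; auto. apply INRp1_pos.
Qed.

Lemma K_w k : 0 <= pK k /\ 0 <= pK k.
Proof. assert (H := pK_ge k). lra. Qed.

Lemma K_mono x y : 0 < x -> x <= y -> K x <= K y.
Proof. intros. apply F_mono; auto. apply K_w. Qed.

Lemma K_rate x y : 0 < x -> x <= y -> y - x <= K y - K x.
Proof.
  intros Hx Hxy. assert (H := F_diff_lower pK pK x y 1 Hx Hxy ltac:(intros; apply pK_ge) ltac:(intros; apply pK_ge)).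
  unfold K. lra.
Qed.

Lemma S'_ge n m : (n <= m)%nat -> Sn n <= S' m.
Proof. intros H. unfold S'. eapply Rle_trans; [apply emax_ge|]. apply emax_mono; auto. Qed.

Lemma K_lower t u n : 0 < t -> goodn n t -> t / 2 <= u <= t -> Sn n * (t - u) <= K t - K u.
Proof.
  intros Ht [Hn1 [Hn2 Hn3]] Hu. unfold K. apply F_diff_lower; try lra.
  - intros k [Hk1 Hk2]. unfold pK. apply S'_ge. apply INR_le_nat. rewrite plus_INR, mult_INR. simpl INR.
    assert (Hk := pos_INR k).
    assert (Hit : / t < 1) by (rewrite <- Rinv_1; apply Rinv_lt_contravar; lra).
    unfold Rmax in Hn3. destruct Rle_dec; lra.
  - intros k [Hk1 Hk2]. unfold pK. apply S'_ge. apply INR_le_nat. rewrite plus_INR, mult_INR. simpl INR.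
    assert (Hk := pos_INR k).
    assert (Hi1 : / (INR k + 1) <= 1) by (rewrite <- Rinv_1; apply inv_le_mono; lra).
    assert (Hit : / t < INR k + 2).
    { rewrite <- (Rinv_inv (INR k + 2)). apply Rinv_lt_contravar; auto.
      apply Rmult_lt_0_compat; auto. apply Rinv_0_lt_compat; lra. }
    unfold Rmax in Hn3. destruct Rle_dec; lra.
Qed.

Lemma K_lip a b : 0 < a -> exists L, forall x y, a <= x -> x <= y -> y <= b -> K y - K x <= L * (y - x).
Proof.
  intros Ha. destruct (nat_above (Rmax b (/ a))) as [Km HKm].
  exists (pK Km). intros x y Hx Hxy Hy. unfold K. apply F_diff_upper; try lra.
  - intros k [Hk1 Hk2]. unfold pK, S'. apply emax_mono. apply INR_le_nat in HKm || idtac.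
    assert (HkK : (k <= Km)%nat).
    { apply INR_le_nat. assert (b <= Rmax b (/ a)) by apply Rmax_l. lra. }
    lia.
  - intros k [Hk1 Hk2]. unfold pK, S'. apply emax_mono.
    assert (HkK : (k <= Km)%nat).
    { apply INR_le_nat. assert (/ a <= Rmax b (/ a)) by apply Rmax_r.
      assert (/ x <= / a) by (apply inv_le_mono; lra).
      assert (H1 : INR k + 1 < / x).
      { rewrite <- (Rinv_inv (INR k + 1)). apply Rinv_lt_contravar; auto.
        apply Rmult_lt_0_compat; [lra|]. apply Rinv_0_lt_compat, INRp1_pos. }
      lra. }
    lia.
Qed.

Lemma Sn_w n : phi (INR n + 1) <= Sn n * w n.
Proof.
  unfold Sn. destruct (Hw n) as [Hwn _].
  assert (H1 := Kinf_nonneg phi Hphi (INR n + 1) ltac:(apply Rlt_le, INRp1_pos)).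
  assert (H2 := INRp1_pos n).
  replace ((phi (INR n + 1) * (/ w n + 4 * (INR n + 1)) + 1) * w n) with
    (phi (INR n + 1) + phi (INR n + 1) * (4 * (INR n + 1) * w n) + w n) by (field; lra).
  assert (0 <= phi (INR n + 1) * (4 * (INR n + 1) * w n)) by (apply Rmult_le_pos; [lra|]; apply Rmult_le_pos; lra).
  lra.
Qed.

Lemma Sn_t n t : / (INR n + 1) <= t -> phi (INR n + 1) <= Sn n * (t / 4).
Proof.
  intros Ht. unfold Sn. destruct (Hw n) as [Hwn _].
  assert (H1 := Kinf_nonneg phi Hphi (INR n + 1) ltac:(apply Rlt_le, INRp1_pos)).
  assert (H2 := INRp1_pos n).
  assert (H3 : 1 <= (INR n + 1) * t).
  { apply (Rmult_le_compat_l (INR n + 1)) in Ht; [|lra]. rewrite Rinv_r in Ht; lra. }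
  assert (H4 : 0 < / w n) by (apply Rinv_0_lt_compat; auto).
  assert (H5 : 0 < t). { assert (0 < / (INR n + 1)) by (apply Rinv_0_lt_compat; lra). lra. }
  assert (phi (INR n + 1) * (/ w n * (t/4)) >= 0) by (apply Rle_ge, Rmult_le_pos; [lra|]; apply Rmult_le_pos; lra).
  nra.
Qed.

Lemma phi_mono x y : 0 <= x -> x <= y -> phi x <= phi y.
Proof. apply Kinf_mono; auto. Qed.

Lemma Esig_lb t n i : 0 < t -> goodn n t -> forall y, Esig i t y -> sv t i - ee n <= y.
Proof.
  intros Ht Hn y [u [Hu ->]]. destruct Hn as [Hn1 [Hn2 Hn3]].
  assert (Hu0 : 0 < u) by lra.
  destruct (stil_bounds u i Hu0) as [Hs1 Hs2].
  assert (Hosc := C_osc u Hu0 n ltac:(unfold Rmax in *; assert (/ t <= / u) by (apply inv_le_mono; lra);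
    repeat destruct Rle_dec; lra)).
  assert (HK := K_lower t u n Ht (conj Hn1 (conj Hn2 Hn3)) Hu).
  destruct (Rlt_dec (Rabs (t - u)) (w n)) as [h|h].
  - destruct (Hw n) as [_ Hw']. assert (H := Hw' t u ltac:(lra) ltac:(lra) h i).
    apply Rabs_le_between in H. assert (Sn n * (t - u) >= 0) by (apply Rle_ge, Rmult_le_pos; [assert (Hs := Sn_pos n); lra|lra]).
    lra.
  - rewrite Rabs_pos_eq in h by lra.
    assert (Hw1 := Sn_w n). assert (Sn n * w n <= Sn n * (t - u)) by (apply Rmult_le_compat_l; [assert (Hs := Sn_pos n); lra|lra]).
    assert (Hpt := phi_mono t (INR n + 1) ltac:(lra) Hn2).
    assert (Hst := sv_phi t ltac:(lra) i). assert (Hsu := sv_ge u ltac:(lra) i).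
    assert (0 <= ee n) by (left; apply ee_pos). lra.
Qed.

Lemma sig_close t n i : 0 < t -> goodn n t -> sv t i - ee n <= sig t i <= sv t i.
Proof.
  intros Ht Hn. unfold sig. destruct (Rlt_dec 0 t) as [_|h]; [|lra].
  destruct (glb_fin (Esig i t) (sv t i - ee n)) as [_ [H2 H3]].
  - exists (stil i t + K t - K t). exists t. split; auto; lra.
  - apply Esig_lb; auto.
  - split; auto. assert (H := H2 (stil i t + K t - K t) ltac:(exists t; split; auto; lra)).
    destruct (stil_bounds t i Ht). lra.
Qed.

Lemma sig_0 : sig 0 = vconst 0.
Proof. apply functional_extensionality. intros i. unfold sig, vconst. destruct Rlt_dec; lra. Qed.

Lemma sig_decay t : 0 <= t -> forall i, Gam_rho Ii gam mu (rho2 rho) (sig t) i <= sig t i.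
Proof.
  intros Ht i. destruct (Req_dec t 0) as [->|Ht0].
  - rewrite sig_0. unfold Gam_rho. rewrite (G_zero Ii gam mu HG i). unfold rho2, vconst.
    rewrite (Kinf_0 rho Hrho). lra.
  - destruct (n_ex t ltac:(lra)) as [n Hn].
    apply (ee_valid n t (proj1 Hn)). intros j. apply sig_close; auto. lra.
Qed.

Lemma sig_lb t i : 0 <= t -> t / 2 <= sig t i.
Proof.
  intros Ht. destruct (Req_dec t 0) as [->|Ht0].
  - rewrite sig_0. unfold vconst. lra.
  - destruct (n_ex t ltac:(lra)) as [n Hn]. destruct (sig_close t n i ltac:(lra) Hn).
    assert (H1 := ee_small n). assert (H2 := sv_ge t Ht i). destruct Hn. lra.
Qed.

Lemma sig_ub t i : 0 <= t -> sig t i <= phi t.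
Proof.
  intros Ht. destruct (Req_dec t 0) as [->|Ht0].
  - rewrite sig_0. unfold vconst. rewrite (Kinf_0 phi Hphi). lra.
  - destruct (n_ex t ltac:(lra)) as [n Hn]. destruct (sig_close t n i ltac:(lra) Hn).
    assert (H2 := sv_phi t Ht i). lra.
Qed.

Lemma C_rate a b : 0 < a -> exists l, 0 < l /\ forall x y, a <= x -> x <= y -> y <= b -> l * (y - x) <= C y - C x.
Proof.
  intros Ha. destruct (nat_above (Rmax b (/ a))) as [Km HKm].
  destruct (finite_min (fun k => Rmin (cC k) (dC k)) ltac:(intros k; apply Rmin_pos; [apply cC_pos|apply dC_pos]) Km)
    as [l [Hl Hl']].
  exists l. split; auto. intros x y Hx Hxy Hy. unfold C. apply F_diff_lower; try lra.
  - intros k [Hk1 Hk2]. assert (HkK : (k <= Km)%nat).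
    { apply INR_le_nat. assert (b <= Rmax b (/ a)) by apply Rmax_l. lra. }
    eapply Rle_trans; [apply (Hl' k HkK)|apply Rmin_l].
  - intros k [Hk1 Hk2]. assert (HkK : (k <= Km)%nat).
    { apply INR_le_nat. assert (/ a <= Rmax b (/ a)) by apply Rmax_r.
      assert (/ x <= / a) by (apply inv_le_mono; lra).
      assert (H1 : INR k + 1 < / x).
      { rewrite <- (Rinv_inv (INR k + 1)). apply Rinv_lt_contravar; auto.
        apply Rmult_lt_0_compat; [lra|]. apply Rinv_0_lt_compat, INRp1_pos. }
      lra. }
    eapply Rle_trans; [apply (Hl' k HkK)|apply Rmin_r].
Qed.

Lemma sig_elem t i u : 0 < t -> t / 2 <= u <= t -> sig t i <= stil i u + K t - K u.
Proof.
  intros Ht Hu. unfold sig. destruct (Rlt_dec 0 t) as [_|h]; [|lra].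
  destruct (n_ex t Ht) as [n Hn].
  apply (glb_le _ (sv t i - ee n)). apply Esig_lb; auto. exists u. split; auto.
Qed.

Lemma sig_rate a b : 0 < a -> exists l, 0 < l /\ forall t t', a <= t -> t <= t' -> t' <= b ->
  forall i, l * (t' - t) <= sig t' i - sig t i.
Proof.
  intros Ha. destruct (C_rate a b Ha) as [lC [HlC HlC']].
  exists (Rmin lC 1). split. apply Rmin_pos; lra.
  intros t t' Ht Htt Htb i.
  assert (Hm1 : Rmin lC 1 <= lC) by apply Rmin_l. assert (Hm2 : Rmin lC 1 <= 1) by apply Rmin_r.
  assert (Hlow : sig t i + Rmin lC 1 * (t' - t) <= sig t' i).
  { unfold sig at 2. destruct (Rlt_dec 0 t') as [_|h]; [|lra].
    apply glb_ge. exists (stil i t' + K t' - K t'). exists t'. split; auto; lra.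
    intros y [u' [Hu' ->]]. destruct (Rle_dec u' t) as [h|h].
    - assert (H1 := sig_elem t i u' ltac:(lra) ltac:(lra)).
      assert (H2 := K_rate t t' ltac:(lra) Htt).
      assert (Rmin lC 1 * (t' - t) <= 1 * (t' - t)) by (apply Rmult_le_compat_r; lra). lra.
    - assert (H1 := sig_elem t i t ltac:(lra) ltac:(lra)).
      assert (H2 := stil_rate t u' i ltac:(lra) ltac:(lra)).
      assert (H3 := HlC' t u' Ht ltac:(lra) ltac:(lra)).
      assert (H4 := K_rate u' t' ltac:(lra) ltac:(lra)).
      assert (Rmin lC 1 * (u' - t) <= lC * (u' - t)) by (apply Rmult_le_compat_r; lra).
      assert (Rmin lC 1 * (t' - u') <= 1 * (t' - u')) by (apply Rmult_le_compat_r; lra).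
      lra. }
  lra.
Qed.

Lemma sig_lip_local t t' i : 0 < t -> t <= t' -> t' <= 3 * t / 2 -> sig t' i - sig t i <= K t' - K t.
Proof.
  intros Ht Htt Ht3.
  assert (Hup : sig t' i - (K t' - K t) <= sig t i).
  { unfold sig at 2. destruct (Rlt_dec 0 t) as [_|h]; [|lra].
    apply glb_ge. exists (stil i t + K t - K t). exists t. split; auto; lra.
    intros y [u [Hu ->]]. destruct (Rle_dec (t' / 2) u) as [h|h].
    - assert (H := sig_elem t' i u ltac:(lra) ltac:(lra)). lra.
    - destruct (n_ex t Ht) as [n Hn]. destruct Hn as [Hn1 [Hn2 Hn3]].
      assert (HK := K_lower t u n Ht (conj Hn1 (conj Hn2 Hn3)) Hu).
      assert (HS := Sn_t n t Hn1).
      assert (Sn n * (t / 4) <= Sn n * (t - u)) by (apply Rmult_le_compat_l; [assert (Hs := Sn_pos n); lra|lra]).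
      assert (Hpt := phi_mono t (INR n + 1) ltac:(lra) Hn2).
      assert (Hst := sv_phi t ltac:(lra) i).
      destruct (stil_bounds u i ltac:(lra)) as [Hs1 Hs2].
      assert (Hosc := C_osc u ltac:(lra) n ltac:(unfold Rmax in *; assert (/ t <= / u) by (apply inv_le_mono; lra);
        repeat destruct Rle_dec; lra)).
      assert (Hsu := sv_ge u ltac:(lra) i). assert (He := ee_small n).
      assert (Hpos : 0 < / (INR n + 1)) by (apply Rinv_0_lt_compat, INRp1_pos).
      assert (H1 := sig_elem t' i t ltac:(lra) ltac:(lra)).
      destruct (stil_bounds t i Ht) as [_ Hs3]. lra. }
  lra.
Qed.

Lemma sig_lip a b : 0 < a -> exists L, forall t t', a <= t -> t <= t' -> t' <= b ->
  forall i, sig t' i - sig t i <= L * (t' - t).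
Proof.
  intros Ha. destruct (K_lip a b Ha) as [L HL]. exists L. intros t t' Ht Htt Htb i.
  apply (lip_chain (fun x => sig x i) a b L Ha); auto.
  intros x y Hx Hxy Hy Hy3. eapply Rle_trans; [apply sig_lip_local; lra|]. apply HL; lra.
Qed.

End Constr.

Lemma compact_pos (Kc : R -> Prop) : compact Kc -> (forall x, Kc x -> 0 < x) ->
  exists al be, 0 < al /\ forall x, Kc x -> al <= x <= be.
Proof.
  intros Hc Hpos. destruct (compact_P1 Kc Hc) as [m [M HmM]].
  set (fam := mkfamily (fun y => 0 < y) (fun y x => 0 < y /\ y / 2 < x)
                (fun y (h : exists x, 0 < y /\ y / 2 < x) =>
                   match h with ex_intro _ hh => proj1 hh end)).
  assert (Hcov : covering_open_set Kc fam).
  { split.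
    - intros x Hx. exists x. simpl. specialize (Hpos x Hx). split; lra.
    - intros y z [Hy Hz]. simpl in *.
      assert (Hp : 0 < z - y / 2) by lra.
      exists (mkposreal _ Hp). intros u Hu. unfold disc in Hu. simpl in Hu. simpl. split; auto.
      apply Rabs_def2 in Hu. lra. }
  destruct (Hc fam Hcov) as [D [HcovD [l Hl]]].
  set (al := fold_right (fun y acc => Rmin (y / 2) acc) 1 l).
  assert (Hpl : forall y, In y l -> 0 < y) by (intros y Hy; apply Hl in Hy; apply Hy).
  assert (Hal : 0 < al /\ forall y, In y l -> al <= y / 2).
  { unfold al. clear -Hpl. induction l as [|y l IH]; simpl.
    - split; [lra|]. intros _ [].
    - assert (IH' := IH ltac:(intros z Hz; apply Hpl; right; auto)). destruct IH' as [IH1 IH2].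
      assert (Hy := Hpl y (or_introl eq_refl)). split.
      + apply Rmin_pos; lra.
      + intros z [<-|Hz]. apply Rmin_l. eapply Rle_trans; [apply Rmin_r|]. auto. }
  exists al, M. split; [apply Hal|]. intros x Hx. split; [|apply HmM; auto].
  destruct (HcovD x Hx) as [y [[Hy Hyx] HDy]]. simpl in *.
  assert (Hyl : In y l) by (apply Hl; split; auto).
  assert (H := proj2 Hal y Hyl). lra.
Qed.

Lemma half_K : Kinf (fun t => t / 2).
Proof.
  split; [lra|]. split; [|split].
  - intros x Hx eps He. exists eps. split; auto. intros y Hy Hyx.
    replace (y / 2 - x / 2) with ((y - x) / 2) by field. rewrite Rabs_div, (Rabs_pos_eq 2) by lra. lra.
  - intros; lra.
  - intros M. exists (2 * Rabs M + 2). split. assert (H := Rabs_pos M). lra.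
    assert (H := Rle_abs M). lra.
Qed.

Section Final.
Context {I : Type} (Hne : inhabited I) (Ii : I -> list I) (gam : I -> I -> R -> R)
  (mu : I -> (I -> R) -> Rbar) (HG : gain_operator Ii gam mu)
  (rho : R -> R) (Hrho : Kinf rho) (phi : R -> R) (Hphi : Kinf phi)
  (Hmbi : forall s b, linf_pos s -> linf_pos b -> vle s (vmax b (Gam_rho Ii gam mu rho s)) ->
      supnorm s <= phi (supnorm b))
  (Hfix : forall r, 0 <= r -> glob_attr_fixed_point (T Ii gam mu rho r) (sigma_star Ii gam mu rho r))
  (e0 : nat -> R)
  (He0 : forall n, 0 < e0 n /\ e0 n <= / (INR n + 1) / 2 /\ Valid Ii gam mu rho (/ (INR n + 1)) (e0 n))
  (w : nat -> R)
  (Hw : forall n, 0 < w n /\ forall u v, 0 <= u <= INR n + 1 -> 0 <= v <= INR n + 1 ->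
     Rabs (u - v) < w n -> forall i, Rabs (s Ii gam mu rho u i - s Ii gam mu rho v i) <= ee e0 n / 2)
  (ML : nat -> nat)
  (HML : forall k u, 0 < u -> / (INR k + 2) < 2 * phi u -> 2 / u <= INR (ML k)).

Local Notation sg := (sig Ii gam mu rho phi e0 w ML).
Let Hdec := sig_decay Hne Ii gam mu HG rho Hrho phi Hphi Hmbi Hfix e0 He0 w Hw ML HML.
Let Hlb := sig_lb Hne Ii gam mu HG rho Hrho phi Hphi Hmbi Hfix e0 He0 w Hw ML HML.
Let Hub := sig_ub Hne Ii gam mu HG rho Hrho phi Hphi Hmbi Hfix e0 He0 w Hw ML HML.
Let Hrate := sig_rate Hne Ii gam mu HG rho Hrho phi Hphi Hmbi Hfix e0 He0 w Hw ML HML.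
Let Hlip := sig_lip Hne Ii gam mu HG rho Hrho phi Hphi Hmbi Hfix e0 He0 w Hw ML HML.
Let H0 := sig_0 Ii gam mu rho phi e0 w ML.

Lemma sg0 i : sg 0 i = 0.
Proof. rewrite H0. reflexivity. Qed.

Lemma sg_K i : Kinf (fun t => sg t i).
Proof.
  split; [apply sg0|]. split; [|split].
  - intros x Hx eps He. destruct (Req_dec x 0) as [->|Hx0].
    + destruct (Kinf_small phi Hphi (eps/2) ltac:(lra)) as [d [Hd Hd']].
      exists d. split; auto. intros y Hy Hyx. rewrite sg0, Rminus_0_r.
      rewrite Rminus_0_r, Rabs_pos_eq in Hyx by auto.
      assert (H1 := Hlb y i Hy). assert (H2 := Hub y i Hy). assert (H3 := Hd' y Hy ltac:(lra)).
      rewrite Rabs_pos_eq; lra.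
    + destruct (Hlip (x/2) (2*x) ltac:(lra)) as [L HL].
      destruct (Hrate (x/2) (2*x) ltac:(lra)) as [l [Hl HL']].
      assert (HLp : 0 < Rabs L + 1) by (assert (H := Rabs_pos L); lra).
      exists (Rmin (x/2) (eps / (Rabs L + 1))). split. apply Rmin_pos. lra. apply Rdiv_lt_0_compat; lra.
      intros y Hy Hyx. assert (Hm1 : Rmin (x/2) (eps / (Rabs L + 1)) <= x/2) by apply Rmin_l.
      assert (Hm2 : Rmin (x/2) (eps / (Rabs L + 1)) <= eps / (Rabs L + 1)) by apply Rmin_r.
      assert (Hyx' : Rabs (y - x) * (Rabs L + 1) < eps).
      { apply (Rmult_lt_compat_r (Rabs L + 1)) in Hyx; auto.
        assert (eps / (Rabs L + 1) * (Rabs L + 1) = eps) by (field; lra). nra. }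
      assert (HLa := Rle_abs L).
      apply Rabs_def2 in Hyx. destruct Hyx as [Hy1 Hy2].
      destruct (Rle_dec x y) as [h|h].
      * assert (A := HL x y ltac:(lra) h ltac:(lra) i). assert (B := HL' x y ltac:(lra) h ltac:(lra) i).
        rewrite Rabs_pos_eq in * by nra. nra.
      * assert (A := HL y x ltac:(lra) ltac:(lra) ltac:(lra) i). assert (B := HL' y x ltac:(lra) ltac:(lra) ltac:(lra) i).
        rewrite (Rabs_left1 (y - x)) in Hyx' by lra. rewrite Rabs_left1 by nra. nra.
  - intros x y Hx Hxy. destruct (Req_dec x 0) as [->|Hx0].
    + rewrite sg0. assert (H := Hlb y i ltac:(lra)). lra.
    + destruct (Hrate x y ltac:(lra)) as [l [Hl HL']].
      assert (H := HL' x y ltac:(lra) ltac:(lra) ltac:(lra) i). nra.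
  - intros M. exists (2 * Rabs M + 2). split. assert (H := Rabs_pos M). lra.
    assert (H := Hlb (2 * Rabs M + 2) i ltac:(assert (H' := Rabs_pos M); lra)).
    assert (H' := Rle_abs M). lra.
Qed.

Lemma main_path : path_strict_decay Ii gam mu sg.
Proof.
  split; [|split; [|split]].
  - exists (rho2 rho). split. apply rho2_K; auto. intros r Hr i. apply Hdec; auto.
  - exists (fun t => t / 2), phi. split; [apply half_K|]. split; [exact Hphi|].
    intros r Hr i. split; [apply Hlb|apply Hub]; auto.
  - apply sg_K.
  - intros Kc Hc Hpos. destruct (compact_pos Kc Hc Hpos) as [al [be [Hal Hab]]].
    destruct (Kinf_small phi Hphi (al/2) ltac:(lra)) as [d [Hd Hd']].
    destruct (Hrate d (2 * be) Hd) as [l0 [Hl0 Hl0']].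
    destruct (Hlip d (2 * be) Hd) as [L0 HL0].
    assert (HLp : 0 < Rabs L0 + 1) by (assert (H := Rabs_pos L0); lra).
    exists (/ (Rabs L0 + 1)), (Rmax (/ l0) (/ (Rabs L0 + 1))).
    split. apply Rinv_0_lt_compat; lra. split. apply Rmax_r.
    intros i r1 r2 t1 t2 Hr1 Hr2 Ht1 Ht2 E1 E2.
    assert (Hrange : forall t r, Kc r -> 0 <= t -> sg t i = r -> d <= t <= 2 * be).
    { intros t r Hr Ht Et. destruct (Hab r Hr) as [Hr1' Hr2'].
      assert (A := Hlb t i Ht). assert (B := Hub t i Ht). split.
      - destruct (Rle_dec d t) as [h|h]; auto. assert (C := Hd' t Ht ltac:(lra)). lra.
      - lra. }
    destruct (Hrange t1 r1 Hr1 Ht1 E1) as [Ha1 Hb1]. destruct (Hrange t2 r2 Hr2 Ht2 E2) as [Ha2 Hb2].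
    assert (Hbi : l0 * Rabs (t1 - t2) <= Rabs (r1 - r2) <= L0 * Rabs (t1 - t2)).
    { destruct (Rle_dec t1 t2) as [h|h].
      - assert (A := Hl0' t1 t2 Ha1 h Hb2 i). assert (B := HL0 t1 t2 Ha1 h Hb2 i).
        rewrite <- E1, <- E2. rewrite Rabs_left1 by lra. rewrite Rabs_left1 by nra. lra.
      - assert (A := Hl0' t2 t1 Ha2 ltac:(lra) Hb1 i). assert (B := HL0 t2 t1 Ha2 ltac:(lra) Hb1 i).
        rewrite <- E1, <- E2. rewrite Rabs_pos_eq by lra. rewrite Rabs_pos_eq by nra. lra. }
    destruct Hbi as [B1 B2]. assert (HLa := Rle_abs L0). assert (Hta := Rabs_pos (t1 - t2)).
    assert (Hra := Rabs_pos (r1 - r2)).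
    split.
    + apply (Rmult_le_reg_l (Rabs L0 + 1)); auto. rewrite <- Rmult_assoc, Rinv_r by lra. nra.
    + eapply Rle_trans with (/ l0 * Rabs (r1 - r2)).
      * apply (Rmult_le_reg_l l0); auto. rewrite <- Rmult_assoc, Rinv_r by lra. lra.
      * apply Rmult_le_compat_r; auto. apply Rmax_l.
Qed.

End Final.

Theorem theorem3p13 (I : Type) (Hne : inhabited I)
  (Hcount : exists f : I -> nat, forall x y, f x = f y -> x = y)
  (Ii : I -> list I) (gam : I -> I -> R -> R) (mu : I -> (I -> R) -> Rbar) :
  gain_operator Ii gam mu ->
  (exists rho, Kinf rho /\
     MBI (Gam_rho Ii gam mu rho) /\
     forall r, 0 <= r ->
       (forall i, is_finite (sigma_star_Rbar Ii gam mu rho r i)) /\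
       glob_attr_fixed_point
         (fun s => vmax (vconst r) (Gam_rho Ii gam mu rho s))
         (sigma_star Ii gam mu rho r)) ->
  exists sigma : R -> I -> R, path_strict_decay Ii gam mu sigma.
Proof.
  intros HG [rho [Hrho [[phi [Hphi Hmbi]] Hr]]].
  assert (Hfix : forall r, 0 <= r -> glob_attr_fixed_point (T Ii gam mu rho r) (sigma_star Ii gam mu rho r))
    by (intros r H; exact (proj2 (Hr r H))).
  destruct (ex_e Ii gam mu HG rho Hrho Hfix) as [e0 He0].
  destruct (ex_w Hne Ii gam mu HG rho Hrho phi Hphi Hmbi Hfix e0 He0) as [w Hw].
  destruct (ex_ML phi Hphi) as [ML HML].
  exists (sig Ii gam mu rho phi e0 w ML).
  exact (main_path Hne Ii gam mu HG rho Hrho phi Hphi Hmbi Hfix e0 He0 w Hw ML HML).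
Qed.
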